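(* Let $M$ be a surface in $\mathcal{H}^2\times\mathbb{R}$ whose extrinsic curvature and Gaussian curvature both vanish identically, and let $H$ be the mean curvature of $M$. Let $\gamma$ be an asymptotic line of $M$ through parabolic points of $M$, parametrized by arc length $s$. Then along $\gamma$, $$\frac{d^2}{ds^2}\left(\frac{1}{H}\right)=0.$$
   Context: $\mathcal{H}^2$ is the hyperbolic plane of curvature $-1$; $\mathcal{H}^2\times\mathbb{R}$ has the product metric. For a surface $M$ with principal curvatures $k_1,k_2$, the extrinsic curvature is $k_1k_2$, the Gaussian curvature is that of the induced metric, and the mean curvature is $H=(k_1+k_2)/2$. A point is parabolic if exactly one principal curvature is zero and the other nonzero (so $H\neq 0$ there). At a parabolic point the principal direction with principal curvature zero is the asymptotic direction; an asymptotic line is a curve whose tangent vectors are asymptotic directions. *)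

(* Defs.v *)
From Stdlib Require Import Reals List.
From Coquelicot Require Import Coquelicot.
Open Scope R_scope.

(** H^2 = upper sheet of the hyperboloid {x : -x0^2+x1^2+x2^2 = -1, x0 > 0}
  in Minkowski space, so H^2 x R sits in R^4 with the Lorentzian form
  <a,b> = -a0 b0 + a1 b1 + a2 b2 + a3 b3, whose restriction to the tangent
  spaces of H^2 x R is the product metric (curvature -1 on H^2). *)

Definition vec4 := nat -> R.
Definition mink (a b : vec4) : R :=
  - a 0%nat * b 0%nat + a 1%nat * b 1%nat + a 2%nat * b 2%nat + a 3%nat * b 3%nat.

Definition pd1 (f : R -> R -> R) : R -> R -> R := fun u v => Derive (fun t => f t v) u.
Definition pd2 (f : R -> R -> R) : R -> R -> R := fun u v => Derive (fun t => f u t) v.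

(** Iterated partial derivative along a word of directions (true = d/du). *)
Fixpoint pdw (w : list bool) (f : R -> R -> R) : R -> R -> R :=
  match w with
  | nil => f
  | b :: w' => if b then pd1 (pdw w' f) else pd2 (pdw w' f)
  end.

Definition smooth_on (U : R * R -> Prop) (f : R -> R -> R) : Prop :=
  forall (w : list bool) (p : R * R), U p ->
    ex_derive (fun t => pdw w f t (snd p)) (fst p) /\
    ex_derive (fun t => pdw w f (fst p) t) (snd p) /\
    continuous (fun q : R * R => pdw w f (fst q) (snd q)) p.

Definition smooth1_on (a b : R) (f : R -> R) : Prop :=
  forall (n : nat) (s : R), a < s < b -> ex_derive_n f n s.

(** A parametrized surface X : U -> R^4 (chart of M), coordinatewise. *)
Definition param := nat -> R -> R -> R.
Definition at_ (X : param) (u v : R) : vec4 := fun i => X i u v.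
Definition Xu (X : param) (u v : R) : vec4 := fun i => pd1 (X i) u v.
Definition Xv (X : param) (u v : R) : vec4 := fun i => pd2 (X i) u v.
Definition Xuu (X : param) (u v : R) : vec4 := fun i => pd1 (pd1 (X i)) u v.
Definition Xuv (X : param) (u v : R) : vec4 := fun i => pd2 (pd1 (X i)) u v.
Definition Xvv (X : param) (u v : R) : vec4 := fun i => pd2 (pd2 (X i)) u v.

Definition EE (X : param) : R -> R -> R := fun u v => mink (Xu X u v) (Xu X u v).
Definition FF (X : param) : R -> R -> R := fun u v => mink (Xu X u v) (Xv X u v).
Definition GG (X : param) : R -> R -> R := fun u v => mink (Xv X u v) (Xv X u v).
Definition detg (X : param) (u v : R) : R := EE X u v * GG X u v - FF X u v ^ 2.

Definition surface_in_H2xR (U : R * R -> Prop) (X : param) : Prop :=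
  open U /\
  (forall i, (i < 4)%nat -> smooth_on U (X i)) /\
  (forall p, U p ->
     - X 0%nat (fst p) (snd p) ^ 2 + X 1%nat (fst p) (snd p) ^ 2
       + X 2%nat (fst p) (snd p) ^ 2 = -1 /\
     0 < X 0%nat (fst p) (snd p) /\
     0 < detg X (fst p) (snd p)).

(** N is a smooth unit normal field of the surface, tangent to H^2 x R
    (the H^2-part of N is orthogonal to the position vector in H^2). *)
Definition unit_normal (U : R * R -> Prop) (X N : param) : Prop :=
  (forall i, (i < 4)%nat -> smooth_on U (N i)) /\
  (forall p, U p ->
     let u := fst p in let v := snd p in
     mink (at_ N u v) (at_ N u v) = 1 /\
     mink (at_ N u v) (Xu X u v) = 0 /\
     mink (at_ N u v) (Xv X u v) = 0 /\
     mink (at_ N u v)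
       (fun i => if Nat.eqb i 3 then 0 else X i u v) = 0).

(** Second fundamental form w.r.t. N (the normal component of the ambient
    second derivative; the Levi-Civita connection of H^2 x R is the
    tangential part of the flat ambient derivative). *)
Definition h11 (X N : param) (u v : R) : R := mink (Xuu X u v) (at_ N u v).
Definition h12 (X N : param) (u v : R) : R := mink (Xuv X u v) (at_ N u v).
Definition h22 (X N : param) (u v : R) : R := mink (Xvv X u v) (at_ N u v).

(** Shape operator S = g^{-1} h acting on coordinates (a,b) of the tangent
    vector a X_u + b X_v. *)
Definition shape (X N : param) (u v : R) (c : R * R) : R * R :=
  let E := EE X u v in let F := FF X u v in let G := GG X u v in
  let D := detg X u v in
  let a := fst c in let b := snd c in
  ((G * (h11 X N u v * a + h12 X N u v * b) - F * (h12 X N u v * a + h22 X N u v * b)) / D,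
   (- F * (h11 X N u v * a + h12 X N u v * b) + E * (h12 X N u v * a + h22 X N u v * b)) / D).

Definition principal_dir (X N : param) (u v k : R) (c : R * R) : Prop :=
  c <> (0, 0) /\ shape X N u v c = (k * fst c, k * snd c).
Definition principal_curvature (X N : param) (u v k : R) : Prop :=
  exists c, principal_dir X N u v k c.

Definition extrinsic_curv (X N : param) (u v : R) : R :=
  (h11 X N u v * h22 X N u v - h12 X N u v ^ 2) / detg X u v.
Definition mean_curv (X N : param) (u v : R) : R :=
  (GG X u v * h11 X N u v - 2 * FF X u v * h12 X N u v + EE X u v * h22 X N u v)
  / (2 * detg X u v).

Definition parabolic (X N : param) (u v : R) : Prop :=
  principal_curvature X N u v 0 /\
  exists k, k <> 0 /\ principal_curvature X N u v k.

Definition asymptotic_dir (X N : param) (u v : R) (c : R * R) : Prop :=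
  parabolic X N u v /\ principal_dir X N u v 0 c.

(** Gaussian curvature of the induced metric (Brioschi formula). *)
Definition det3 (a11 a12 a13 a21 a22 a23 a31 a32 a33 : R) : R :=
  a11 * (a22 * a33 - a23 * a32) - a12 * (a21 * a33 - a23 * a31)
  + a13 * (a21 * a32 - a22 * a31).

Definition gauss_curv (X : param) (u v : R) : R :=
  let E := EE X in let F := FF X in let G := GG X in
  (det3 (- pd2 (pd2 E) u v / 2 + pd2 (pd1 F) u v - pd1 (pd1 G) u v / 2)
        (pd1 E u v / 2) (pd1 F u v - pd2 E u v / 2)
        (pd2 F u v - pd1 G u v / 2) (E u v) (F u v)
        (pd2 G u v / 2) (F u v) (G u v)
   - det3 0 (pd2 E u v / 2) (pd1 G u v / 2)
          (pd2 E u v / 2) (E u v) (F u v)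
          (pd1 G u v / 2) (F u v) (G u v))
  / (detg X u v ^ 2).

Definition curve (X : param) (cu cv : R -> R) : nat -> R -> R :=
  fun i s => X i (cu s) (cv s).

(* Main.v *)
Require Import Defs.
From Stdlib Require Import Reals Lra Lia List.
From Coquelicot Require Import Coquelicot.
Import ListNotations.
Open Scope R_scope.

Definition det3' (a11 a12 a13 a21 a22 a23 a31 a32 a33 : R) : R :=
  a11 * (a22 * a33 - a23 * a32) - a12 * (a21 * a33 - a23 * a31)
  + a13 * (a21 * a32 - a22 * a31).
Definition det4 (a11 a12 a13 a14 a21 a22 a23 a24 a31 a32 a33 a34 a41 a42 a43 a44 : R) : R :=
  a11 * det3' a22 a23 a24 a32 a33 a34 a42 a43 a44
  - a12 * det3' a21 a23 a24 a31 a33 a34 a41 a43 a44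
  + a13 * det3' a21 a22 a24 a31 a32 a34 a41 a42 a44
  - a14 * det3' a21 a22 a23 a31 a32 a33 a41 a42 a43.

Lemma orth_zero (a b c d r : vec4) :
  det4 (a 0%nat) (a 1%nat) (a 2%nat) (a 3%nat) (b 0%nat) (b 1%nat) (b 2%nat) (b 3%nat)
       (c 0%nat) (c 1%nat) (c 2%nat) (c 3%nat) (d 0%nat) (d 1%nat) (d 2%nat) (d 3%nat) <> 0 ->
  mink a r = 0 -> mink b r = 0 -> mink c r = 0 -> mink d r = 0 ->
  forall i, (i < 4)%nat -> r i = 0.
Proof.
  unfold mink. intros Hdet Ha Hb Hc Hd.
  set (a0 := a 0%nat) in *; set (a1 := a 1%nat) in *; set (a2 := a 2%nat) in *; set (a3 := a 3%nat) in *.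
  set (b0 := b 0%nat) in *; set (b1 := b 1%nat) in *; set (b2 := b 2%nat) in *; set (b3 := b 3%nat) in *.
  set (c0 := c 0%nat) in *; set (c1 := c 1%nat) in *; set (c2 := c 2%nat) in *; set (c3 := c 3%nat) in *.
  set (d0 := d 0%nat) in *; set (d1 := d 1%nat) in *; set (d2 := d 2%nat) in *; set (d3 := d 3%nat) in *.
  set (r0 := r 0%nat) in *; set (r1 := r 1%nat) in *; set (r2 := r 2%nat) in *; set (r3 := r 3%nat) in *.
  set (dd := det4 a0 a1 a2 a3 b0 b1 b2 b3 c0 c1 c2 c3 d0 d1 d2 d3) in *.
  assert (E0 : dd * r0 = - det4 (- a0 * r0 + a1 * r1 + a2 * r2 + a3 * r3) a1 a2 a3
                                 (- b0 * r0 + b1 * r1 + b2 * r2 + b3 * r3) b1 b2 b3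
                                 (- c0 * r0 + c1 * r1 + c2 * r2 + c3 * r3) c1 c2 c3
                                 (- d0 * r0 + d1 * r1 + d2 * r2 + d3 * r3) d1 d2 d3)
    by (unfold dd, det4, det3'; ring).
  assert (E1 : dd * r1 = det4 a0 (- a0 * r0 + a1 * r1 + a2 * r2 + a3 * r3) a2 a3
                                 b0 (- b0 * r0 + b1 * r1 + b2 * r2 + b3 * r3) b2 b3
                                 c0 (- c0 * r0 + c1 * r1 + c2 * r2 + c3 * r3) c2 c3
                                 d0 (- d0 * r0 + d1 * r1 + d2 * r2 + d3 * r3) d2 d3)
    by (unfold dd, det4, det3'; ring).
  assert (E2 : dd * r2 = det4 a0 a1 (- a0 * r0 + a1 * r1 + a2 * r2 + a3 * r3) a3
                                 b0 b1 (- b0 * r0 + b1 * r1 + b2 * r2 + b3 * r3) b3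
                                 c0 c1 (- c0 * r0 + c1 * r1 + c2 * r2 + c3 * r3) c3
                                 d0 d1 (- d0 * r0 + d1 * r1 + d2 * r2 + d3 * r3) d3)
    by (unfold dd, det4, det3'; ring).
  assert (E3 : dd * r3 = det4 a0 a1 a2 (- a0 * r0 + a1 * r1 + a2 * r2 + a3 * r3)
                                 b0 b1 b2 (- b0 * r0 + b1 * r1 + b2 * r2 + b3 * r3)
                                 c0 c1 c2 (- c0 * r0 + c1 * r1 + c2 * r2 + c3 * r3)
                                 d0 d1 d2 (- d0 * r0 + d1 * r1 + d2 * r2 + d3 * r3))
    by (unfold dd, det4, det3'; ring).
  rewrite Ha, Hb, Hc, Hd in E0, E1, E2, E3.
  assert (Z0 : r0 = 0) by (apply (Rmult_eq_reg_l dd); [|exact Hdet]; rewrite E0; unfold det4, det3'; ring).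
  assert (Z1 : r1 = 0) by (apply (Rmult_eq_reg_l dd); [|exact Hdet]; rewrite E1; unfold det4, det3'; ring).
  assert (Z2 : r2 = 0) by (apply (Rmult_eq_reg_l dd); [|exact Hdet]; rewrite E2; unfold det4, det3'; ring).
  assert (Z3 : r3 = 0) by (apply (Rmult_eq_reg_l dd); [|exact Hdet]; rewrite E3; unfold det4, det3'; ring).
  intros i Hi.
  destruct i as [|[|[|[|i]]]]; try lia; assumption.
Qed.

Lemma gram_det (a b c d : vec4) :
  det4 (mink a a) (mink a b) (mink a c) (mink a d)
       (mink b a) (mink b b) (mink b c) (mink b d)
       (mink c a) (mink c b) (mink c c) (mink c d)
       (mink d a) (mink d b) (mink d c) (mink d d)
  = - (det4 (a 0%nat) (a 1%nat) (a 2%nat) (a 3%nat) (b 0%nat) (b 1%nat) (b 2%nat) (b 3%nat)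
       (c 0%nat) (c 1%nat) (c 2%nat) (c 3%nat) (d 0%nat) (d 1%nat) (d 2%nat) (d 3%nat))^2.
Proof. unfold det4, det3', mink. ring. Qed.

Definition frame (a b n p : vec4) : Prop :=
  mink a a * mink b b - mink a b ^ 2 <> 0 /\
  mink n n = 1 /\ mink p p = -1 /\ mink n a = 0 /\ mink n b = 0 /\
  mink p a = 0 /\ mink p b = 0 /\ mink n p = 0.

Lemma frame_zero (a b n p r : vec4) : frame a b n p ->
  mink r a = 0 -> mink r b = 0 -> mink r n = 0 -> mink r p = 0 ->
  forall i, (i < 4)%nat -> r i = 0.
Proof.
  intros (HD & Hnn & Hpp & Hna & Hnb & Hpa & Hpb & Hnp) Ha Hb Hn Hp.
  apply (orth_zero a b n p r).
  - intro H0. pose proof (gram_det a b n p) as G. rewrite H0 in G.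
    assert (mink b a = mink a b) by (unfold mink; ring).
    assert (mink a n = 0) by (rewrite <- Hna; unfold mink; ring).
    assert (mink b n = 0) by (rewrite <- Hnb; unfold mink; ring).
    assert (mink a p = 0) by (rewrite <- Hpa; unfold mink; ring).
    assert (mink b p = 0) by (rewrite <- Hpb; unfold mink; ring).
    assert (mink p n = 0) by (rewrite <- Hnp; unfold mink; ring).
    rewrite H, H1, H2, H3, H4, H5, Hnn, Hpp, Hna, Hnb, Hpa, Hpb, Hnp in G.
    apply HD. unfold det4, det3' in G. simpl in G. lra.
  - rewrite <- Ha; unfold mink; ring.
  - rewrite <- Hb; unfold mink; ring.
  - rewrite <- Hn; unfold mink; ring.
  - rewrite <- Hp; unfold mink; ring.
Qed.

Lemma mink_sym (x y : vec4) : mink x y = mink y x.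
Proof. unfold mink; ring. Qed.

Lemma mink_lin4 (z a b n p Y : vec4) al be ga de :
  mink (fun i => z i - (al * a i + be * b i + ga * n i - de * p i)) Y =
  mink z Y - (al * mink a Y + be * mink b Y + ga * mink n Y - de * mink p Y).
Proof. unfold mink; ring. Qed.

Definition Tf (a b : vec4) (w z : vec4) : R :=
  (mink b b * mink w a * mink z a
   - mink a b * (mink w a * mink z b + mink w b * mink z a)
   + mink a a * mink w b * mink z b) / (mink a a * mink b b - mink a b ^ 2).

Lemma decomp (a b n p z : vec4) : frame a b n p ->
  forall i, (i < 4)%nat ->
  z i = ((mink b b * mink z a - mink a b * mink z b) / (mink a a * mink b b - mink a b ^ 2)) * a i
      + ((mink a a * mink z b - mink a b * mink z a) / (mink a a * mink b b - mink a b ^ 2)) * b i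
      + mink z n * n i - mink z p * p i.
Proof.
  intros Hf i Hi.
  pose proof Hf as (HD & Hnn & Hpp & Hna & Hnb & Hpa & Hpb & Hnp).
  set (D := mink a a * mink b b - mink a b ^ 2) in *.
  set (al := (mink b b * mink z a - mink a b * mink z b) / D).
  set (be := (mink a a * mink z b - mink a b * mink z a) / D).
  assert (H := frame_zero a b n p (fun i => z i - (al * a i + be * b i + mink z n * n i - mink z p * p i)) Hf).
  assert (Hba : mink b a = mink a b) by apply mink_sym.
  assert (Han : mink a n = 0) by (rewrite mink_sym; exact Hna).
  assert (Hbn : mink b n = 0) by (rewrite mink_sym; exact Hnb).
  assert (Hap : mink a p = 0) by (rewrite mink_sym; exact Hpa).
  assert (Hbp : mink b p = 0) by (rewrite mink_sym; exact Hpb).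
  assert (Hpn : mink p n = 0) by (rewrite mink_sym; exact Hnp).
  rewrite !mink_lin4 in H.
  rewrite Hba, Han, Hbn, Hap, Hbp, Hpn, Hnn, Hpp, Hna, Hnb, Hpa, Hpb, Hnp in H.
  assert (Z : forall i, (i < 4)%nat -> z i - (al * a i + be * b i + mink z n * n i - mink z p * p i) = 0).
  { apply H; unfold al, be, D in *; try (field; exact HD); lra. }
  specialize (Z i Hi). lra.
Qed.

Lemma mink_ext_r (w z z' : vec4) : (forall i, (i < 4)%nat -> z i = z' i) -> mink w z = mink w z'.
Proof. intros H; unfold mink; rewrite !H by lia; reflexivity. Qed.

Lemma mink_lin4' (w a b n p : vec4) al be ga de :
  mink w (fun i => al * a i + be * b i + ga * n i - de * p i) =
  al * mink w a + be * mink w b + ga * mink w n - de * mink w p.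
Proof. unfold mink; ring. Qed.

Lemma parseval (a b n p w z : vec4) : frame a b n p ->
  mink w z = Tf a b w z + mink w n * mink z n - mink w p * mink z p.
Proof.
  intros Hf.
  pose proof Hf as (HD & _).
  rewrite (mink_ext_r w z _ (decomp a b n p z Hf)).
  rewrite mink_lin4'. unfold Tf.
  rewrite (mink_sym w a), (mink_sym w b), (mink_sym w n), (mink_sym w p).
  field. exact HD.
Qed.


Lemma isd_plus (f g : R -> R) x a b : is_derive f x a -> is_derive g x b ->
  is_derive (fun t => f t + g t) x (a + b).
Proof. intros Hf Hg. exact (is_derive_plus f g x a b Hf Hg). Qed.
Lemma isd_minus (f g : R -> R) x a b : is_derive f x a -> is_derive g x b ->
  is_derive (fun t => f t - g t) x (a - b).
Proof. intros Hf Hg. exact (is_derive_minus f g x a b Hf Hg). Qed.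
Lemma isd_opp (f : R -> R) x a : is_derive f x a ->
  is_derive (fun t => - f t) x (- a).
Proof. intros Hf. exact (is_derive_opp f x a Hf). Qed.
Lemma isd_mult (f g : R -> R) x a b : is_derive f x a -> is_derive g x b ->
  is_derive (fun t => f t * g t) x (a * g x + f x * b).
Proof. intros Hf Hg. exact (is_derive_mult f g x a b Hf Hg (fun n m => Rmult_comm n m)). Qed.
Lemma isd_const (c x : R) : is_derive (fun _ => c) x 0.
Proof. exact (is_derive_const c x). Qed.
Lemma isd_ext (f g : R -> R) (x a b : R) : (forall t, f t = g t) -> a = b -> is_derive f x a -> is_derive g x b.
Proof. intros H1 H2 H3. subst b. eapply is_derive_ext; eauto. Qed.

Lemma isd_mink (A B : R -> vec4) (x : R) (dA dB : vec4) :
  (forall i, (i < 4)%nat -> is_derive (fun t => A t i) x (dA i)) ->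
  (forall i, (i < 4)%nat -> is_derive (fun t => B t i) x (dB i)) ->
  is_derive (fun t => mink (A t) (B t)) x (mink dA (B x) + mink (A x) dB).
Proof.
  intros HA HB. unfold mink.
  assert (P : forall i, (i < 4)%nat -> is_derive (fun t => A t i * B t i) x (dA i * B x i + A x i * dB i))
    by (intros i Hi; apply isd_mult; auto).
  assert (Q : is_derive (fun t => - (A t 0%nat * B t 0%nat) + A t 1%nat * B t 1%nat + A t 2%nat * B t 2%nat + A t 3%nat * B t 3%nat) x
     (- (dA 0%nat * B x 0%nat + A x 0%nat * dB 0%nat) + (dA 1%nat * B x 1%nat + A x 1%nat * dB 1%nat)
      + (dA 2%nat * B x 2%nat + A x 2%nat * dB 2%nat) + (dA 3%nat * B x 3%nat + A x 3%nat * dB 3%nat))).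
  { apply isd_plus; [apply isd_plus; [apply isd_plus|]|]; try (apply P; lia).
    apply isd_opp, P; lia. }
  eapply isd_ext; [| |exact Q]; [intro t; cbv beta; ring | ring].
Qed.

Lemma open_loc2 (U : R * R -> Prop) x y : open U -> U (x, y) ->
  locally_2d (fun u v => U (u, v)) x y.
Proof.
  intros HU Hxy. apply locally_2d_locally.
  apply (filter_imp U). { intros [a b]; simpl; auto. }
  apply HU; exact Hxy.
Qed.

Lemma loc2_1 (U : R * R -> Prop) x y : open U -> U (x, y) ->
  locally x (fun t => U (t, y)).
Proof. intros HU H. exact (locally_2d_1d_const_y _ x y (open_loc2 U x y HU H)). Qed.
Lemma loc2_2 (U : R * R -> Prop) x y : open U -> U (x, y) ->
  locally y (fun t => U (x, t)).
Proof. intros HU H. exact (locally_2d_1d_const_x _ x y (open_loc2 U x y HU H)). Qed.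

Section Smooth.
Variable U : R * R -> Prop.
Variable f : R -> R -> R.
Hypothesis Hs : smooth_on U f.

Lemma sm_d1 w u v : U (u, v) -> is_derive (fun t => pdw w f t v) u (pdw (true :: w) f u v).
Proof. intros H. apply (Derive_correct (fun t => pdw w f t v) u). exact (proj1 (Hs w (u, v) H)). Qed.
Lemma sm_d2 w u v : U (u, v) -> is_derive (fun t => pdw w f u t) v (pdw (false :: w) f u v).
Proof. intros H. apply (Derive_correct (fun t => pdw w f u t) v). exact (proj1 (proj2 (Hs w (u, v) H))). Qed.
Lemma sm_c w u v : U (u, v) -> continuity_2d_pt (pdw w f) u v.
Proof. intros H. apply continuity_2d_pt_filterlim. exact (proj2 (proj2 (Hs w (u, v) H))). Qed.
End Smooth.

Lemma diff_partials (f : R -> R -> R) (x y : R) :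
  locally_2d (fun u v => ex_derive (fun z => f z v) u) x y ->
  continuity_2d_pt (fun u v => Derive (fun z => f z v) u) x y ->
  ex_derive (fun z => f x z) y ->
  differentiable_pt_lim f x y (Derive (fun z => f z y) x) (Derive (fun z => f x z) y).
Proof.
  intros [d3 Hd3] Hc Hy eps.
  set (lx := Derive (fun z => f z y) x).
  set (ly := Derive (fun z => f x z) y).
  assert (He2 : 0 < eps / 2) by (destruct eps; simpl; lra).
  destruct (Hc (mkposreal _ He2)) as [d2 Hd2].
  assert (Hly := Derive_correct _ _ Hy). apply is_derive_Reals in Hly.
  destruct (Hly (eps / 2) He2) as [d1 Hd1].
  assert (Hd : 0 < Rmin d1 (Rmin d2 d3)).
  { apply Rmin_pos; [apply cond_pos|apply Rmin_pos; apply cond_pos]. }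
  exists (mkposreal _ Hd). simpl. intros u v Hu Hv.
  assert (Hu1 : Rabs (u - x) < d2) by (eapply Rlt_le_trans; [exact Hu|]; apply Rle_trans with (Rmin d2 d3); [apply Rmin_r|apply Rmin_l]).
  assert (Hu2 : Rabs (u - x) < d3) by (eapply Rlt_le_trans; [exact Hu|]; apply Rle_trans with (Rmin d2 d3); apply Rmin_r).
  assert (Hv1 : Rabs (v - y) < d1) by (eapply Rlt_le_trans; [exact Hv|]; apply Rmin_l).
  assert (Hv2 : Rabs (v - y) < d2) by (eapply Rlt_le_trans; [exact Hv|]; apply Rle_trans with (Rmin d2 d3); [apply Rmin_r|apply Rmin_l]).
  assert (Hv3 : Rabs (v - y) < d3) by (eapply Rlt_le_trans; [exact Hv|]; apply Rle_trans with (Rmin d2 d3); apply Rmin_r).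
  assert (B2 : Rabs (f x v - f x y - ly * (v - y)) <= eps / 2 * Rabs (v - y)).
  { destruct (Req_dec v y) as [->|Hne].
    - replace (f x y - f x y - ly * (y - y)) with 0 by ring. rewrite Rabs_R0.
      replace (y - y) with 0 by ring. rewrite Rabs_R0. lra.
    - assert (Hh : v - y <> 0) by lra.
      specialize (Hd1 (v - y) Hh Hv1). replace (y + (v - y)) with v in Hd1 by ring.
      replace (f x v - f x y - ly * (v - y)) with (((f x v - f x y) / (v - y) - ly) * (v - y)) by (field; exact Hh).
      rewrite Rabs_mult. apply Rmult_le_compat_r; [apply Rabs_pos|]. assert (Eq : Derive (fun z : R_AbsRing => f x z) y = ly) by reflexivity. rewrite Eq in Hd1. lra. }
  assert (B1 : Rabs (f u v - f x v - lx * (u - x)) <= eps / 2 * Rabs (u - x)).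
  { assert (Hin : forall z, Rmin x u <= z <= Rmax x u -> Rabs (z - x) <= Rabs (u - x)).
    { intros z [Hz1 Hz2]. destruct (Rle_dec x u) as [Hxu|Hxu].
      - rewrite Rmin_left in Hz1 by lra. rewrite Rmax_right in Hz2 by lra.
        rewrite (Rabs_right (z - x)) by lra. rewrite (Rabs_right (u - x)) by lra. lra.
      - rewrite Rmin_right in Hz1 by lra. rewrite Rmax_left in Hz2 by lra.
        rewrite (Rabs_left1 (z - x)) by lra. rewrite (Rabs_left (u - x)) by lra. lra. }
    destruct (MVT_gen (fun z => f z v) x u (fun z => Derive (fun t => f t v) z)) as [c [Hc1 Hc2]].
    - intros z Hz. apply Derive_correct. apply Hd3; [|exact Hv3].
      eapply Rle_lt_trans; [apply Hin; lra|exact Hu2].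
    - intros z Hz. apply continuity_pt_filterlim. apply (ex_derive_continuous (fun z => f z v)). apply Hd3; [|exact Hv3].
      eapply Rle_lt_trans; [apply Hin; lra|exact Hu2].
    - rewrite Hc2.
      replace (Derive (fun t => f t v) c * (u - x) - lx * (u - x)) with ((Derive (fun t => f t v) c - lx) * (u - x)) by ring.
      rewrite Rabs_mult. apply Rmult_le_compat_r; [apply Rabs_pos|].
      left. apply (Hd2 c v); [eapply Rle_lt_trans; [apply Hin; exact Hc1|exact Hu1] | exact Hv2]. }
  replace (f u v - f x y - (lx * (u - x) + ly * (v - y))) with
    ((f u v - f x v - lx * (u - x)) + (f x v - f x y - ly * (v - y))) by ring.
  eapply Rle_trans; [apply Rabs_triang|].
  assert (M1 : Rabs (u - x) <= Rmax (Rabs (u - x)) (Rabs (v - y))) by apply Rmax_l.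
  assert (M2 : Rabs (v - y) <= Rmax (Rabs (u - x)) (Rabs (v - y))) by apply Rmax_r.
  assert (0 < eps) by apply cond_pos.
  nra.
Qed.

Lemma sm_chain (U : R * R -> Prop) (f : R -> R -> R) (HU : open U) (Hs : smooth_on U f)
  (w : list bool) (cu cv : R -> R) (s du dv : R) :
  U (cu s, cv s) -> is_derive cu s du -> is_derive cv s dv ->
  is_derive (fun t => pdw w f (cu t) (cv t)) s
    (pdw (true :: w) f (cu s) (cv s) * du + pdw (false :: w) f (cu s) (cv s) * dv).
Proof.
  intros HUs Hu Hv.
  apply is_derive_Reals. apply is_derive_Reals in Hu. apply is_derive_Reals in Hv.
  apply (derivable_pt_lim_comp_2d (pdw w f) cu cv s); auto.
  apply (diff_partials (pdw w f) (cu s) (cv s)).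
  - destruct (open_loc2 U _ _ HU HUs) as [d Hd]. exists d. intros u v H1 H2.
    exact (proj1 (Hs w (u, v) (Hd u v H1 H2))).
  - exact (sm_c U f Hs (true :: w) _ _ HUs).
  - exact (proj1 (proj2 (Hs w _ HUs))).
Qed.

Lemma sm_schwarz (U : R * R -> Prop) (f : R -> R -> R) (HU : open U) (Hs : smooth_on U f)
  (w : list bool) (x y : R) :
  U (x, y) -> pdw (true :: false :: w) f x y = pdw (false :: true :: w) f x y.
Proof.
  intros H.
  apply (Schwarz (pdw w f) x y).
  - destruct (open_loc2 U _ _ HU H) as [d Hd]. exists d. intros u v H1 H2.
    specialize (Hd u v H1 H2).
    split; [exact (proj1 (Hs w _ Hd))|].
    split; [exact (proj1 (proj2 (Hs w _ Hd)))|].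
    split; [exact (proj1 (Hs (false :: w) _ Hd))|].
    exact (proj1 (proj2 (Hs (true :: w) _ Hd))).
  - exact (sm_c U f Hs (true :: false :: w) _ _ H).
  - exact (sm_c U f Hs (false :: true :: w) _ _ H).
Qed.


Lemma gauss_alg (E F G uua uub uva uvb vva vvb h11 h12 h22 c11 c12 c22 a3 b3 n3 P1 P2 K : R) :
  E * G - F ^ 2 <> 0 ->
  P1 = (G * uua * vva - F * (uua * vvb + uub * vva) + E * uub * vvb) / (E * G - F ^ 2) + h11 * h22 - c11 * c22 ->
  P2 = (G * uva * uva - F * (uva * uvb + uvb * uva) + E * uvb * uvb) / (E * G - F ^ 2) + h12 * h12 - c12 * c12 ->
  1 = (G * a3 * a3 - F * (a3 * b3 + b3 * a3) + E * b3 * b3) / (E * G - F ^ 2) + n3 * n3 - 0 * 0 ->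
  c11 = - (E - a3 * a3) -> c12 = - (F - a3 * b3) -> c22 = - (G - b3 * b3) ->
  K = (det3 (P1 - P2) uua uub vva E F vvb F G - det3 0 uva uvb uva E F uvb F G) / (E * G - F ^ 2) ^ 2 ->
  K = (h11 * h22 - h12 ^ 2) / (E * G - F ^ 2) - n3 ^ 2.
Proof.
  intros HD H1 H2 H3 H4 H5 H6 HK.
  assert (Hn : n3 ^ 2 = 1 - (G * a3 * a3 - F * (a3 * b3 + b3 * a3) + E * b3 * b3) / (E * G - F ^ 2)) by (rewrite H3 at 1; ring).
  rewrite Hn, HK, H1, H2, H4, H5, H6. unfold det3. field. exact HD.
Qed.

Lemma rod_alg (E F G h11 h12 h22 a3 b3 : R) :
  E * G - F ^ 2 > 0 ->
  G * h11 * a3 - F * (h11 * b3 + h12 * a3) + E * h12 * b3 = 0 ->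
  G * h12 * a3 - F * (h12 * b3 + h22 * a3) + E * h22 * b3 = 0 ->
  G * a3 * a3 - F * (a3 * b3 + b3 * a3) + E * b3 * b3 = E * G - F ^ 2 ->
  let k := (G * h11 - 2 * F * h12 + E * h22) / (E * G - F ^ 2) in
  h11 = k * (E - a3 * a3) /\ h12 = k * (F - a3 * b3) /\ h22 = k * (G - b3 * b3).
Proof.
  intros HD E1 E2 E3 k.
  set (D := E * G - F ^ 2) in *.
  set (al := G * a3 - F * b3). set (be := E * b3 - F * a3).
  assert (HG : G <> 0) by (intro HG; unfold D in HD; rewrite HG in HD; nra).
  set (M11 := h11 - k * (E - a3 * a3)).
  set (M12 := h12 - k * (F - a3 * b3)).
  set (M22 := h22 - k * (G - b3 * b3)).
  assert (Hab : al * a3 + be * b3 = D) by (unfold al, be; rewrite <- E3; ring).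
  assert (Hk : k * D = G * h11 - 2 * F * h12 + E * h22) by (unfold k; field; lra).
  assert (R1 : M11 * al + M12 * be = 0).
  { unfold M11, M12, al, be.
    replace ((h11 - k * (E - a3 * a3)) * (G * a3 - F * b3) + (h12 - k * (F - a3 * b3)) * (E * b3 - F * a3))
      with ((G * h11 * a3 - F * (h11 * b3 + h12 * a3) + E * h12 * b3) - k * a3 * ((E * G - F^2) - (G * a3 * a3 - F * (a3 * b3 + b3 * a3) + E * b3 * b3))) by ring.
    rewrite E1, E3. unfold D. ring. }
  assert (R2 : M12 * al + M22 * be = 0).
  { unfold M22, M12, al, be.
    replace ((h12 - k * (F - a3 * b3)) * (G * a3 - F * b3) + (h22 - k * (G - b3 * b3)) * (E * b3 - F * a3))
      with ((G * h12 * a3 - F * (h12 * b3 + h22 * a3) + E * h22 * b3) - k * b3 * ((E * G - F^2) - (G * a3 * a3 - F * (a3 * b3 + b3 * a3) + E * b3 * b3))) by ring.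
    rewrite E2, E3. unfold D. ring. }
  assert (R3 : G * M11 - 2 * F * M12 + E * M22 = 0).
  { unfold M11, M12, M22.
    replace (G * (h11 - k * (E - a3 * a3)) - 2 * F * (h12 - k * (F - a3 * b3)) + E * (h22 - k * (G - b3 * b3)))
      with ((G * h11 - 2 * F * h12 + E * h22) - k * D - k * (D - (G * a3 * a3 - F * (a3 * b3 + b3 * a3) + E * b3 * b3))) by (unfold D; ring).
    rewrite <- Hk, E3. fold D. ring. }
  set (Q := G * be ^ 2 + 2 * F * al * be + E * al ^ 2).
  assert (HQ : Q <> 0).
  { intro HQ. assert (GQ : G * Q = (G * be + F * al) ^ 2 + D * al ^ 2) by (unfold Q, D; ring).
    rewrite HQ in GQ.
    assert (S1 : 0 <= (G * be + F * al) ^ 2) by (apply pow2_ge_0).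
    assert (S2 : 0 <= al ^ 2) by (apply pow2_ge_0).
    assert (S3 : 0 <= D * al ^ 2) by (apply Rmult_le_pos; lra).
    assert (S4 : D * al ^ 2 = 0) by lra.
    assert (S5 : al ^ 2 = 0) by (apply (Rmult_eq_reg_l D); [lra|lra]).
    assert (Ha0 : al = 0) by nra.
    assert (S6 : (G * be + F * al) ^ 2 = 0) by lra.
    assert (S7 : G * be + F * al = 0) by nra.
    assert (S8 : G * be = 0) by (rewrite Ha0 in S7; lra).
    assert (Hb0 : be = 0). { apply (Rmult_eq_reg_l G); [|exact HG]. lra. }
    rewrite Ha0, Hb0 in Hab. lra. }
  assert (A1 : M11 * al = - M12 * be) by lra.
  assert (A2 : M22 * be = - M12 * al) by lra.
  assert (X1 : M11 * al ^ 2 = M22 * be ^ 2).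
  { replace (M11 * al ^ 2) with ((M11 * al) * al) by ring.
    replace (M22 * be ^ 2) with ((M22 * be) * be) by ring. rewrite A1, A2; ring. }
  assert (X2 : M11 * al * be = - M12 * be ^ 2).
  { replace (M11 * al * be) with ((M11 * al) * be) by ring. rewrite A1; ring. }
  assert (X3 : M22 * al * be = - M12 * al ^ 2).
  { replace (M22 * al * be) with ((M22 * be) * al) by ring. rewrite A2; ring. }
  assert (Z11 : M11 * Q = be ^ 2 * (G * M11 - 2 * F * M12 + E * M22)).
  { unfold Q. transitivity (G * M11 * be ^ 2 + 2 * F * (M11 * al * be) + E * (M11 * al ^ 2)); [ring|].
    rewrite X1, X2; ring. }
  rewrite R3 in Z11.
  assert (M11z : M11 = 0) by (apply (Rmult_eq_reg_r Q); [lra|exact HQ]).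
  assert (Z22 : M22 * Q = al ^ 2 * (G * M11 - 2 * F * M12 + E * M22)).
  { unfold Q. transitivity (G * (M22 * be ^ 2) + 2 * F * (M22 * al * be) + E * M22 * al ^ 2); [ring|].
    rewrite <- X1, X3; ring. }
  rewrite R3 in Z22.
  assert (M22z : M22 = 0) by (apply (Rmult_eq_reg_r Q); [lra|exact HQ]).
  assert (M12z : M12 = 0).
  { rewrite M11z in R1. rewrite M22z in R2.
    assert (M12 * be = 0) by lra. assert (M12 * al = 0) by lra.
    destruct (Req_dec al 0) as [Ha|Ha].
    - destruct (Req_dec be 0) as [Hb|Hb].
      + rewrite Ha, Hb in Hab. lra.
      + apply (Rmult_eq_reg_r be); [lra|exact Hb].
    - apply (Rmult_eq_reg_r al); [lra|exact Ha]. }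
  unfold M11, M12, M22 in *. repeat split; lra.
Qed.

Lemma shape_alg (E F G h11 h12 h22 c1 c2 d1 d2 k : R) :
  E * G - F ^ 2 <> 0 ->
  (G * (h11 * c1 + h12 * c2) - F * (h12 * c1 + h22 * c2)) / (E * G - F ^ 2) = 0 * c1 ->
  (- F * (h11 * c1 + h12 * c2) + E * (h12 * c1 + h22 * c2)) / (E * G - F ^ 2) = 0 * c2 ->
  (c1, c2) <> (0, 0) ->
  (G * (h11 * d1 + h12 * d2) - F * (h12 * d1 + h22 * d2)) / (E * G - F ^ 2) = k * d1 ->
  (- F * (h11 * d1 + h12 * d2) + E * (h12 * d1 + h22 * d2)) / (E * G - F ^ 2) = k * d2 ->
  (d1, d2) <> (0, 0) -> k <> 0 ->
  h11 * c1 + h12 * c2 = 0 /\ h12 * c1 + h22 * c2 = 0 /\ G * h11 - 2 * F * h12 + E * h22 <> 0.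
Proof.
  intros HD C1 C2 Hc K1 K2 Hd Hk.
  set (D := E * G - F ^ 2) in *.
  set (x := h11 * c1 + h12 * c2) in *.
  set (y := h12 * c1 + h22 * c2) in *.
  assert (P1 : G * x - F * y = 0).
  { apply (Rmult_eq_reg_r (/ D)); [|apply Rinv_neq_0_compat; exact HD]. unfold Rdiv in C1. lra. }
  assert (P2 : - F * x + E * y = 0).
  { apply (Rmult_eq_reg_r (/ D)); [|apply Rinv_neq_0_compat; exact HD]. unfold Rdiv in C2. lra. }
  assert (Hx : x = 0).
  { apply (Rmult_eq_reg_l D); [|exact HD].
    replace (D * x) with (E * (G * x - F * y) + F * (- F * x + E * y)) by (unfold D; ring).
    rewrite P1, P2; ring. }
  assert (Hy : y = 0).
  { apply (Rmult_eq_reg_l D); [|exact HD].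
    replace (D * y) with (F * (G * x - F * y) + G * (- F * x + E * y)) by (unfold D; ring).
    rewrite P1, P2; ring. }
  split; [exact Hx|]. split; [exact Hy|].
  assert (Hdet : h11 * h22 - h12 ^ 2 = 0).
  { destruct (Req_dec c1 0) as [H1|H1].
    - assert (H2 : c2 <> 0) by (intro H2; apply Hc; rewrite H1, H2; reflexivity).
      unfold x, y in Hx, Hy. rewrite H1 in Hx, Hy.
      assert (h12 = 0) by (apply (Rmult_eq_reg_r c2); [lra|exact H2]).
      assert (h22 = 0) by (apply (Rmult_eq_reg_r c2); [lra|exact H2]).
      subst. ring.
    - apply (Rmult_eq_reg_r c1); [|exact H1].
      replace ((h11 * h22 - h12 ^ 2) * c1) with (h22 * x - h12 * y) by (unfold x, y; ring).
      rewrite Hx, Hy; ring. }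
  intro HT.
  set (s11 := (G * h11 - F * h12) / D). set (s12 := (G * h12 - F * h22) / D).
  set (s21 := (- F * h11 + E * h12) / D). set (s22 := (- F * h12 + E * h22) / D).
  assert (S1 : s11 * d1 + s12 * d2 = k * d1) by (rewrite <- K1; unfold s11, s12; field; exact HD).
  assert (S2 : s21 * d1 + s22 * d2 = k * d2) by (rewrite <- K2; unfold s21, s22; field; exact HD).
  assert (Tr : s22 = - s11).
  { replace s22 with ((G * h11 - 2 * F * h12 + E * h22) / D - s11) by (unfold s11, s22; field; exact HD).
    rewrite HT. unfold Rdiv. ring. }
  assert (Dt0 : s11 * s22 - s12 * s21 = (h11 * h22 - h12 ^ 2) / D) by (unfold s11, s12, s21, s22, D in *; field; exact HD).
  rewrite Hdet in Dt0.
  assert (Dt : s12 * s21 = - s11 ^ 2).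
  { rewrite Tr in Dt0. unfold Rdiv in Dt0. rewrite Rmult_0_l in Dt0. lra. }
  assert (Q1 : k * k * d1 = 0).
  { transitivity (s11 * (s11 * d1 + s12 * d2) + s12 * (s21 * d1 + s22 * d2)).
    - rewrite S1, S2. replace (s11 * (k * d1) + s12 * (k * d2)) with (k * (s11 * d1 + s12 * d2)) by ring. rewrite S1. ring.
    - replace (s11 * (s11 * d1 + s12 * d2) + s12 * (s21 * d1 + s22 * d2))
        with ((s11 ^ 2 + s12 * s21) * d1 + s12 * (s11 + s22) * d2) by ring.
      rewrite Dt, Tr. ring. }
  assert (Q2 : k * k * d2 = 0).
  { transitivity (s21 * (s11 * d1 + s12 * d2) + s22 * (s21 * d1 + s22 * d2)).
    - rewrite S1, S2. replace (s21 * (k * d1) + s22 * (k * d2)) with (k * (s21 * d1 + s22 * d2)) by ring. rewrite S2. ring.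
    - replace (s21 * (s11 * d1 + s12 * d2) + s22 * (s21 * d1 + s22 * d2))
        with (s21 * (s11 + s22) * d1 + (s12 * s21 + s22 ^ 2) * d2) by ring.
      rewrite Dt, Tr. ring. }
  assert (kk : k * k <> 0) by (apply Rmult_integral_contrapositive; split; exact Hk).
  apply Hd. f_equal.
  - apply (Rmult_eq_reg_l (k * k)); [lra|exact kk].
  - apply (Rmult_eq_reg_l (k * k)); [lra|exact kk].
Qed.


Definition V (w : list bool) (S : param) (u v : R) : vec4 := fun i => pdw w (S i) u v.
Definition hz (A : vec4) : vec4 := fun i => if Nat.eqb i 3 then 0 else A i.
Definition e3 : vec4 := fun i => if Nat.eqb i 3 then 1 else 0.

Lemma mink_hz_r (A B : vec4) : mink A (hz B) = mink A B - A 3%nat * B 3%nat.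
Proof. unfold mink, hz; simpl; ring. Qed.
Lemma mink_hz_l (A B : vec4) : mink (hz A) B = mink A B - A 3%nat * B 3%nat.
Proof. unfold mink, hz; simpl; ring. Qed.
Lemma mink_e3_l (A : vec4) : mink e3 A = A 3%nat.
Proof. unfold mink, e3; simpl; ring. Qed.
Lemma hz3 (A : vec4) : hz A 3%nat = 0.
Proof. reflexivity. Qed.
Lemma mink_ext_l (w w' z : vec4) : (forall i, (i < 4)%nat -> w i = w' i) -> mink w z = mink w' z.
Proof. intros H; unfold mink; rewrite !H by lia; reflexivity. Qed.
Lemma mink_lin2 (A B Y : vec4) (k l : R) : mink (fun i => k * A i + l * B i) Y = k * mink A Y + l * mink B Y.
Proof. unfold mink; ring. Qed.

Lemma hz_lt3 (A : vec4) i : (i < 3)%nat -> hz A i = A i.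
Proof. intros Hi. destruct i as [|[|[|i]]]; try reflexivity; lia. Qed.

Lemma exd_plus (f g : R -> R) (x : R) : ex_derive f x -> ex_derive g x -> ex_derive (fun t => f t + g t) x.
Proof. intros [a Ha] [b Hb]. exists (a + b). apply isd_plus; auto. Qed.
Lemma exd_minus (f g : R -> R) (x : R) : ex_derive f x -> ex_derive g x -> ex_derive (fun t => f t - g t) x.
Proof. intros [a Ha] [b Hb]. exists (a - b). apply isd_minus; auto. Qed.
Lemma exd_mult (f g : R -> R) (x : R) : ex_derive f x -> ex_derive g x -> ex_derive (fun t => f t * g t) x.
Proof. intros [a Ha] [b Hb]. eexists. apply isd_mult; eauto. Qed.
Lemma exd_const (c x : R) : ex_derive (fun _ => c) x.
Proof. exists 0. apply isd_const. Qed.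

Lemma loc_nz (f : R -> R) (x l : R) : is_derive f x l -> f x <> 0 -> locally x (fun t => f t <> 0).
Proof.
  intros Hd Hx.
  assert (C : continuity_pt f x).
  { apply continuity_pt_filterlim. exact (ex_derive_continuous f x (ex_intro _ l Hd)). }
  rewrite continuity_pt_locally in C.
  assert (Hp : 0 < Rabs (f x)) by (apply Rabs_pos_lt; exact Hx).
  apply (filter_imp (fun t => Rabs (f t - f x) < mkposreal _ Hp)); [|apply C].
  simpl. intros t Ht Z. rewrite Z in Ht. rewrite Rminus_0_l, Rabs_Ropp in Ht. lra.
Qed.

Lemma mc_aux (A B : R) : B <> 0 -> (- (- (2 * A) * B)) / (2 * B) = A.
Proof. intros H; field; exact H. Qed.

Lemma nz_pick (a b : vec4) : 0 < mink a a * mink b b - mink a b ^ 2 ->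
  exists i, (i < 3)%nat /\ (a i <> 0 \/ b i <> 0).
Proof.
  intros H.
  destruct (Req_dec (a 0%nat) 0) as [a0|a0]; [|exists 0%nat; split; [lia|left; exact a0]].
  destruct (Req_dec (a 1%nat) 0) as [a1|a1]; [|exists 1%nat; split; [lia|left; exact a1]].
  destruct (Req_dec (a 2%nat) 0) as [a2|a2]; [|exists 2%nat; split; [lia|left; exact a2]].
  destruct (Req_dec (b 0%nat) 0) as [b0|b0]; [|exists 0%nat; split; [lia|right; exact b0]].
  destruct (Req_dec (b 1%nat) 0) as [b1|b1]; [|exists 1%nat; split; [lia|right; exact b1]].
  destruct (Req_dec (b 2%nat) 0) as [b2|b2]; [|exists 2%nat; split; [lia|right; exact b2]].
  exfalso. unfold mink in H. rewrite a0, a1, a2, b0, b1, b2 in H. nra.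
Qed.

Section Geo.
Variable U : R * R -> Prop.
Variables X N : param.
Hypothesis HU : open U.

Definition smooth4 (S : param) := forall i, (i < 4)%nat -> smooth_on U (S i).

Lemma dV1 S (HS : smooth4 S) w u v : U (u, v) ->
  forall i, (i < 4)%nat -> is_derive (fun t => V w S t v i) u (V (true :: w) S u v i).
Proof. intros H i Hi. exact (sm_d1 U (S i) (HS i Hi) w u v H). Qed.
Lemma dV2 S (HS : smooth4 S) w u v : U (u, v) ->
  forall i, (i < 4)%nat -> is_derive (fun t => V w S u t i) v (V (false :: w) S u v i).
Proof. intros H i Hi. exact (sm_d2 U (S i) (HS i Hi) w u v H). Qed.
Lemma dH1 S (HS : smooth4 S) w u v : U (u, v) ->
  forall i, (i < 4)%nat -> is_derive (fun t => hz (V w S t v) i) u (hz (V (true :: w) S u v) i).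
Proof. intros H i Hi. unfold hz. destruct (Nat.eqb i 3); [apply isd_const|apply (dV1 S HS w u v H i Hi)]. Qed.
Lemma dH2 S (HS : smooth4 S) w u v : U (u, v) ->
  forall i, (i < 4)%nat -> is_derive (fun t => hz (V w S u t) i) v (hz (V (false :: w) S u v) i).
Proof. intros H i Hi. unfold hz. destruct (Nat.eqb i 3); [apply isd_const|apply (dV2 S HS w u v H i Hi)]. Qed.

Lemma dz1 (g : R -> R) u v l c : U (u, v) -> (forall t, U (t, v) -> g t = c) -> is_derive g u l -> l = 0.
Proof.
  intros H Hg Hd.
  assert (Hc : is_derive g u 0).
  { apply (is_derive_ext_loc (fun _ => c)).
    - apply (filter_imp (fun t => U (t, v))); [intros t Ht; symmetry; apply Hg, Ht|exact (loc2_1 U u v HU H)].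
    - apply isd_const. }
  apply is_derive_unique in Hd. apply is_derive_unique in Hc. congruence.
Qed.
Lemma dz2 (g : R -> R) u v l c : U (u, v) -> (forall t, U (u, t) -> g t = c) -> is_derive g v l -> l = 0.
Proof.
  intros H Hg Hd.
  assert (Hc : is_derive g v 0).
  { apply (is_derive_ext_loc (fun _ => c)).
    - apply (filter_imp (fun t => U (u, t))); [intros t Ht; symmetry; apply Hg, Ht|exact (loc2_2 U u v HU H)].
    - apply isd_const. }
  apply is_derive_unique in Hd. apply is_derive_unique in Hc. congruence.
Qed.


Variable SX : smooth4 X.
Variable SN : smooth4 N.
Hypothesis HX : surface_in_H2xR U X.
Hypothesis HN : unit_normal U X N.

Lemma dm1 S1 S2 (H1 : smooth4 S1) (H2 : smooth4 S2) w1 w2 u v : U (u, v) ->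
  is_derive (fun t => mink (V w1 S1 t v) (V w2 S2 t v)) u
    (mink (V (true :: w1) S1 u v) (V w2 S2 u v) + mink (V w1 S1 u v) (V (true :: w2) S2 u v)).
Proof. intros H. apply (isd_mink (fun t => V w1 S1 t v) (fun t => V w2 S2 t v) u); [apply (dV1 S1 H1 w1 u v H)|apply (dV1 S2 H2 w2 u v H)]. Qed.
Lemma dm2 S1 S2 (H1 : smooth4 S1) (H2 : smooth4 S2) w1 w2 u v : U (u, v) ->
  is_derive (fun t => mink (V w1 S1 u t) (V w2 S2 u t)) v
    (mink (V (false :: w1) S1 u v) (V w2 S2 u v) + mink (V w1 S1 u v) (V (false :: w2) S2 u v)).
Proof. intros H. apply (isd_mink (fun t => V w1 S1 u t) (fun t => V w2 S2 u t) v); [apply (dV2 S1 H1 w1 u v H)|apply (dV2 S2 H2 w2 u v H)]. Qed.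
Lemma dmh1 S1 S2 (H1 : smooth4 S1) (H2 : smooth4 S2) w1 w2 u v : U (u, v) ->
  is_derive (fun t => mink (V w1 S1 t v) (hz (V w2 S2 t v))) u
    (mink (V (true :: w1) S1 u v) (hz (V w2 S2 u v)) + mink (V w1 S1 u v) (hz (V (true :: w2) S2 u v))).
Proof. intros H. apply (isd_mink (fun t => V w1 S1 t v) (fun t => hz (V w2 S2 t v)) u); [apply (dV1 S1 H1 w1 u v H)|apply (dH1 S2 H2 w2 u v H)]. Qed.
Lemma dmh2 S1 S2 (H1 : smooth4 S1) (H2 : smooth4 S2) w1 w2 u v : U (u, v) ->
  is_derive (fun t => mink (V w1 S1 u t) (hz (V w2 S2 u t))) v
    (mink (V (false :: w1) S1 u v) (hz (V w2 S2 u v)) + mink (V w1 S1 u v) (hz (V (false :: w2) S2 u v))).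
Proof. intros H. apply (isd_mink (fun t => V w1 S1 u t) (fun t => hz (V w2 S2 u t)) v); [apply (dV2 S1 H1 w1 u v H)|apply (dH2 S2 H2 w2 u v H)]. Qed.

Lemma con u v : U (u, v) -> mink (hz (V nil X u v)) (hz (V nil X u v)) = -1.
Proof.
  intros H. destruct HX as (_ & _ & Hc). destruct (Hc (u, v) H) as (Hc1 & _). simpl in Hc1.
  unfold mink, hz, V; simpl. lra.
Qed.

Lemma pa u v : U (u, v) -> mink (hz (V nil X u v)) (V [true] X u v) = 0.
Proof.
  intros H.
  assert (D := dmh1 X X SX SX nil nil u v H).
  apply isd_ext with (g := fun t => mink (hz (V nil X t v)) (hz (V nil X t v)))
    (b := mink (hz (V [true] X u v)) (hz (V nil X u v)) + mink (hz (V nil X u v)) (hz (V [true] X u v))) in D.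
  - apply (dz1 _ u v _ (-1) H (fun t Ht => con t v Ht)) in D.
    unfold mink, hz, V in *; simpl in *. lra.
  - intros t. unfold mink, hz, V; simpl. ring.
  - unfold mink, hz, V; simpl. ring.
Qed.

Lemma pb u v : U (u, v) -> mink (hz (V nil X u v)) (V [false] X u v) = 0.
Proof.
  intros H.
  assert (D := dmh2 X X SX SX nil nil u v H).
  apply isd_ext with (g := fun t => mink (hz (V nil X u t)) (hz (V nil X u t)))
    (b := mink (hz (V [false] X u v)) (hz (V nil X u v)) + mink (hz (V nil X u v)) (hz (V [false] X u v))) in D.
  - apply (dz2 _ u v _ (-1) H (fun t Ht => con u t Ht)) in D.
    unfold mink, hz, V in *; simpl in *. lra.
  - intros t. unfold mink, hz, V; simpl. ring.
  - unfold mink, hz, V; simpl. ring.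
Qed.

Lemma detpos u v : U (u, v) ->
  0 < mink (V [true] X u v) (V [true] X u v) * mink (V [false] X u v) (V [false] X u v)
      - mink (V [true] X u v) (V [false] X u v) ^ 2.
Proof.
  intros H. destruct HX as (_ & _ & Hc). destruct (Hc (u, v) H) as (_ & _ & Hd).
  exact Hd.
Qed.

Lemma frameP u v : U (u, v) ->
  frame (V [true] X u v) (V [false] X u v) (V nil N u v) (hz (V nil X u v)).
Proof.
  intros H. destruct HN as (_ & Hn). destruct (Hn (u, v) H) as (Hnn & Hna & Hnb & Hnp).
  unfold frame. split; [apply Rgt_not_eq, Rlt_gt, (detpos u v H)|].
  split; [exact Hnn|]. split; [exact (con u v H)|].
  split; [exact Hna|]. split; [exact Hnb|].
  split; [exact (pa u v H)|]. split; [exact (pb u v H)|]. exact Hnp.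
Qed.

Lemma c11 u v : U (u, v) ->
  mink (V [true; true] X u v) (hz (V nil X u v)) + mink (V [true] X u v) (hz (V [true] X u v)) = 0.
Proof. intros H. exact (dz1 _ u v _ 0 H (fun t Ht => eq_trans (mink_sym _ _) (pa t v Ht)) (dmh1 X X SX SX [true] nil u v H)). Qed.
Lemma c12 u v : U (u, v) ->
  mink (V [false; true] X u v) (hz (V nil X u v)) + mink (V [true] X u v) (hz (V [false] X u v)) = 0.
Proof. intros H. exact (dz2 _ u v _ 0 H (fun t Ht => eq_trans (mink_sym _ _) (pa u t Ht)) (dmh2 X X SX SX [true] nil u v H)). Qed.
Lemma c22 u v : U (u, v) ->
  mink (V [false; false] X u v) (hz (V nil X u v)) + mink (V [false] X u v) (hz (V [false] X u v)) = 0.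
Proof. intros H. exact (dz2 _ u v _ 0 H (fun t Ht => eq_trans (mink_sym _ _) (pb u t Ht)) (dmh2 X X SX SX [false] nil u v H)). Qed.

Lemma schw2 f (Hf : smooth_on U f) u v : U (u, v) -> pdw [true; false] f u v = pdw [false; true] f u v.
Proof. intros H. exact (sm_schwarz U f HU Hf nil u v H). Qed.
Lemma schw3a f (Hf : smooth_on U f) u v : U (u, v) -> pdw [true; true; false] f u v = pdw [false; true; true] f u v.
Proof.
  intros H.
  transitivity (pdw [true; false; true] f u v).
  - change (Derive (fun t => pdw [true; false] f t v) u = Derive (fun t => pdw [false; true] f t v) u).
    apply Derive_ext_loc.
    apply (filter_imp (fun t => U (t, v))); [intros t Ht; exact (schw2 f Hf t v Ht)|exact (loc2_1 U u v HU H)].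
  - exact (sm_schwarz U f HU Hf [true] u v H).
Qed.
Lemma schw3b f (Hf : smooth_on U f) u v : U (u, v) -> pdw [false; true; false] f u v = pdw [false; false; true] f u v.
Proof.
  intros H.
  change (Derive (fun t => pdw [true; false] f u t) v = Derive (fun t => pdw [false; true] f u t) v).
  apply Derive_ext_loc.
  apply (filter_imp (fun t => U (u, t))); [intros t Ht; exact (schw2 f Hf u t Ht)|exact (loc2_2 U u v HU H)].
Qed.

Lemma Vschw2 S (HS : smooth4 S) u v : U (u, v) -> forall i, (i < 4)%nat -> V [true; false] S u v i = V [false; true] S u v i.
Proof. intros H i Hi. exact (schw2 (S i) (HS i Hi) u v H). Qed.
Lemma Vschw3a S (HS : smooth4 S) u v : U (u, v) -> forall i, (i < 4)%nat -> V [true; true; false] S u v i = V [false; true; true] S u v i.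
Proof. intros H i Hi. exact (schw3a (S i) (HS i Hi) u v H). Qed.
Lemma Vschw3b S (HS : smooth4 S) u v : U (u, v) -> forall i, (i < 4)%nat -> V [false; true; false] S u v i = V [false; false; true] S u v i.
Proof. intros H i Hi. exact (schw3b (S i) (HS i Hi) u v H). Qed.

Local Notation Xa u v := (V [true] X u v).
Local Notation Xb u v := (V [false] X u v).
Local Notation Xaa u v := (V [true; true] X u v).
Local Notation Xab u v := (V [false; true] X u v).
Local Notation Xba u v := (V [true; false] X u v).
Local Notation Xbb u v := (V [false; false] X u v).
Local Notation Nn u v := (V nil N u v).
Local Notation Ph u v := (hz (V nil X u v)).

Ltac pdval L := first [unfold pd1 | unfold pd2]; apply is_derive_unique; exact L.

Lemma ent u v : U (u, v) ->
  (- pd2 (pd2 (EE X)) u v / 2 + pd2 (pd1 (FF X)) u v - pd1 (pd1 (GG X)) u v / 2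
     = mink (Xaa u v) (Xbb u v) - mink (Xab u v) (Xab u v)) /\
  pd1 (EE X) u v / 2 = mink (Xaa u v) (Xa u v) /\
  pd1 (FF X) u v - pd2 (EE X) u v / 2 = mink (Xaa u v) (Xb u v) /\
  pd2 (FF X) u v - pd1 (GG X) u v / 2 = mink (Xbb u v) (Xa u v) /\
  pd2 (GG X) u v / 2 = mink (Xbb u v) (Xb u v) /\
  pd2 (EE X) u v / 2 = mink (Xab u v) (Xa u v) /\
  pd1 (GG X) u v / 2 = mink (Xab u v) (Xb u v).
Proof.
  intros H.
  assert (dEu : pd1 (EE X) u v = mink (Xaa u v) (Xa u v) + mink (Xa u v) (Xaa u v)) by pdval (dm1 X X SX SX [true] [true] u v H).
  assert (dEv : pd2 (EE X) u v = mink (Xab u v) (Xa u v) + mink (Xa u v) (Xab u v)) by pdval (dm2 X X SX SX [true] [true] u v H).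
  assert (dFu : pd1 (FF X) u v = mink (Xaa u v) (Xb u v) + mink (Xa u v) (Xba u v)) by pdval (dm1 X X SX SX [true] [false] u v H).
  assert (dFv : pd2 (FF X) u v = mink (Xab u v) (Xb u v) + mink (Xa u v) (Xbb u v)) by pdval (dm2 X X SX SX [true] [false] u v H).
  assert (dGu : pd1 (GG X) u v = mink (Xba u v) (Xb u v) + mink (Xb u v) (Xba u v)) by pdval (dm1 X X SX SX [false] [false] u v H).
  assert (dGv : pd2 (GG X) u v = mink (Xbb u v) (Xb u v) + mink (Xb u v) (Xbb u v)) by pdval (dm2 X X SX SX [false] [false] u v H).
  assert (dEvv : pd2 (pd2 (EE X)) u v =
     (mink (V [false; false; true] X u v) (Xa u v) + mink (Xab u v) (Xab u v))
     + (mink (Xab u v) (Xab u v) + mink (Xa u v) (V [false; false; true] X u v))).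
  { transitivity (Derive (fun t => mink (Xab u t) (Xa u t) + mink (Xa u t) (Xab u t)) v); swap 1 2.
    - apply is_derive_unique. apply isd_plus; [exact (dm2 X X SX SX [false; true] [true] u v H)|exact (dm2 X X SX SX [true] [false; true] u v H)].
    - apply Derive_ext_loc. apply (filter_imp (fun t => U (u, t))); [|exact (loc2_2 U u v HU H)].
      intros t Ht. pdval (dm2 X X SX SX [true] [true] u t Ht). }
  assert (dFuv : pd2 (pd1 (FF X)) u v =
     (mink (V [false; true; true] X u v) (Xb u v) + mink (Xaa u v) (Xbb u v))
     + (mink (Xab u v) (Xba u v) + mink (Xa u v) (V [false; true; false] X u v))).
  { transitivity (Derive (fun t => mink (Xaa u t) (Xb u t) + mink (Xa u t) (Xba u t)) v); swap 1 2.
    - apply is_derive_unique. apply isd_plus; [exact (dm2 X X SX SX [true; true] [false] u v H)|exact (dm2 X X SX SX [true] [true; false] u v H)].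
    - apply Derive_ext_loc. apply (filter_imp (fun t => U (u, t))); [|exact (loc2_2 U u v HU H)].
      intros t Ht. pdval (dm1 X X SX SX [true] [false] u t Ht). }
  assert (dGuu : pd1 (pd1 (GG X)) u v =
     (mink (V [true; true; false] X u v) (Xb u v) + mink (Xba u v) (Xba u v))
     + (mink (Xba u v) (Xba u v) + mink (Xb u v) (V [true; true; false] X u v))).
  { transitivity (Derive (fun t => mink (Xba t v) (Xb t v) + mink (Xb t v) (Xba t v)) u); swap 1 2.
    - apply is_derive_unique. apply isd_plus; [exact (dm1 X X SX SX [true; false] [false] u v H)|exact (dm1 X X SX SX [false] [true; false] u v H)].
    - apply Derive_ext_loc. apply (filter_imp (fun t => U (t, v))); [|exact (loc2_1 U u v HU H)].
      intros t Ht. pdval (dm1 X X SX SX [false] [false] t v Ht). }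
  assert (S1 : forall Y, mink Y (Xba u v) = mink Y (Xab u v)) by (intro Y; apply mink_ext_r, (Vschw2 X SX u v H)).
  assert (S1' : forall Y, mink (Xba u v) Y = mink (Xab u v) Y) by (intro Y; apply mink_ext_l, (Vschw2 X SX u v H)).
  assert (S2 : forall Y, mink Y (V [true; true; false] X u v) = mink Y (V [false; true; true] X u v)) by (intro Y; apply mink_ext_r, (Vschw3a X SX u v H)).
  assert (S2' : forall Y, mink (V [true; true; false] X u v) Y = mink (V [false; true; true] X u v) Y) by (intro Y; apply mink_ext_l, (Vschw3a X SX u v H)).
  assert (S3 : forall Y, mink Y (V [false; true; false] X u v) = mink Y (V [false; false; true] X u v)) by (intro Y; apply mink_ext_r, (Vschw3b X SX u v H)).
  rewrite dEu, dEv, dFu, dFv, dGu, dGv, dEvv, dFuv, dGuu.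
  rewrite !S1, !S1', !S2, !S2', !S3.
  rewrite (mink_sym (Xa u v) (V [false; false; true] X u v)), (mink_sym (Xb u v) (V [false; true; true] X u v)),
    (mink_sym (Xa u v) (Xaa u v)), (mink_sym (Xa u v) (Xab u v)), (mink_sym (Xb u v) (Xab u v)),
    (mink_sym (Xb u v) (Xbb u v)), (mink_sym (Xa u v) (Xbb u v)).
  repeat split; lra.
Qed.

Lemma parse_e3 u v : U (u, v) ->
  1 = (mink (Xb u v) (Xb u v) * Xa u v 3%nat * Xa u v 3%nat
       - mink (Xa u v) (Xb u v) * (Xa u v 3%nat * Xb u v 3%nat + Xb u v 3%nat * Xa u v 3%nat)
       + mink (Xa u v) (Xa u v) * Xb u v 3%nat * Xb u v 3%nat)
      / (mink (Xa u v) (Xa u v) * mink (Xb u v) (Xb u v) - mink (Xa u v) (Xb u v) ^ 2)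
      + Nn u v 3%nat * Nn u v 3%nat - 0 * 0.
Proof.
  intros H.
  pose proof (parseval _ _ _ _ e3 e3 (frameP u v H)) as Pe.
  unfold Tf in Pe. rewrite !mink_e3_l in Pe. rewrite hz3 in Pe.
  change (e3 3%nat) with 1 in Pe. exact Pe.
Qed.

Lemma n3zero u v : U (u, v) -> gauss_curv X u v = 0 -> extrinsic_curv X N u v = 0 -> N 3%nat u v = 0.
Proof.
  intros H HK HE.
  destruct (ent u v H) as (E1 & E2 & E3 & E4 & E5 & E6 & E7).
  assert (HD := detpos u v H).
  assert (K := gauss_alg (mink (Xa u v) (Xa u v)) (mink (Xa u v) (Xb u v)) (mink (Xb u v) (Xb u v))
     (mink (Xaa u v) (Xa u v)) (mink (Xaa u v) (Xb u v)) (mink (Xab u v) (Xa u v)) (mink (Xab u v) (Xb u v))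
     (mink (Xbb u v) (Xa u v)) (mink (Xbb u v) (Xb u v))
     (h11 X N u v) (h12 X N u v) (h22 X N u v)
     (mink (Xaa u v) (Ph u v)) (mink (Xab u v) (Ph u v)) (mink (Xbb u v) (Ph u v))
     (Xa u v 3%nat) (Xb u v 3%nat) (Nn u v 3%nat)
     (mink (Xaa u v) (Xbb u v)) (mink (Xab u v) (Xab u v)) (gauss_curv X u v)).
  assert (Ke : (h11 X N u v * h22 X N u v - h12 X N u v ^ 2) / (mink (Xa u v) (Xa u v) * mink (Xb u v) (Xb u v) - mink (Xa u v) (Xb u v) ^ 2) = 0) by exact HE.
  assert (K' : gauss_curv X u v = (h11 X N u v * h22 X N u v - h12 X N u v ^ 2) / (mink (Xa u v) (Xa u v) * mink (Xb u v) (Xb u v) - mink (Xa u v) (Xb u v) ^ 2) - Nn u v 3%nat ^ 2).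
  { apply K.
    - lra.
    - exact (parseval _ _ _ _ (Xaa u v) (Xbb u v) (frameP u v H)).
    - exact (parseval _ _ _ _ (Xab u v) (Xab u v) (frameP u v H)).
    - exact (parse_e3 u v H).
    - pose proof (c11 u v H) as C. rewrite (mink_hz_r (Xa u v) (Xa u v)) in C. lra.
    - pose proof (c12 u v H) as C. rewrite (mink_hz_r (Xa u v) (Xb u v)) in C. lra.
    - pose proof (c22 u v H) as C. rewrite (mink_hz_r (Xb u v) (Xb u v)) in C. lra.
    - unfold gauss_curv. cbv zeta. rewrite E1, E2, E3, E4, E5, E6, E7. reflexivity. }
  rewrite HK, Ke in K'.
  change (Nn u v 3%nat) with (N 3%nat u v) in K'.
  nra.
Qed.

Hypothesis Hn3 : forall u v, U (u, v) -> N 3%nat u v = 0.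

Lemma unitN u v : U (u, v) ->
  mink (Nn u v) (Nn u v) = 1 /\ mink (Nn u v) (Xa u v) = 0 /\ mink (Nn u v) (Xb u v) = 0 /\ mink (Nn u v) (Ph u v) = 0.
Proof. intros H. destruct HN as (_ & Hn). exact (Hn (u, v) H). Qed.

Local Notation Nu u v := (V [true] N u v).
Local Notation Nv u v := (V [false] N u v).

Lemma nfacts u v : U (u, v) ->
  mink (Nu u v) (Xa u v) = - h11 X N u v /\ mink (Nu u v) (Xb u v) = - h12 X N u v /\
  mink (Nu u v) (Nn u v) = 0 /\ mink (Nu u v) (Ph u v) = 0 /\
  mink (Nv u v) (Xa u v) = - h12 X N u v /\ mink (Nv u v) (Xb u v) = - h22 X N u v /\
  mink (Nv u v) (Nn u v) = 0 /\ mink (Nv u v) (Ph u v) = 0 /\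
  Nu u v 3%nat = 0 /\ Nv u v 3%nat = 0.
Proof.
  intros H.
  assert (F1 := dz1 _ u v _ 0 H (fun t Ht => proj1 (proj2 (unitN t v Ht))) (dm1 N X SN SX nil [true] u v H)).
  assert (F2 := dz1 _ u v _ 0 H (fun t Ht => proj1 (proj2 (proj2 (unitN t v Ht)))) (dm1 N X SN SX nil [false] u v H)).
  assert (F3 := dz1 _ u v _ 1 H (fun t Ht => proj1 (unitN t v Ht)) (dm1 N N SN SN nil nil u v H)).
  assert (F4 := dz1 _ u v _ 0 H (fun t Ht => proj2 (proj2 (proj2 (unitN t v Ht)))) (dmh1 N X SN SX nil nil u v H)).
  assert (G1 := dz2 _ u v _ 0 H (fun t Ht => proj1 (proj2 (unitN u t Ht))) (dm2 N X SN SX nil [true] u v H)).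
  assert (G2 := dz2 _ u v _ 0 H (fun t Ht => proj1 (proj2 (proj2 (unitN u t Ht)))) (dm2 N X SN SX nil [false] u v H)).
  assert (G3 := dz2 _ u v _ 1 H (fun t Ht => proj1 (unitN u t Ht)) (dm2 N N SN SN nil nil u v H)).
  assert (G4 := dz2 _ u v _ 0 H (fun t Ht => proj2 (proj2 (proj2 (unitN u t Ht)))) (dmh2 N X SN SX nil nil u v H)).
  assert (T1 := dz1 _ u v _ 0 H (fun t Ht => Hn3 t v Ht) (sm_d1 U (N 3%nat) (SN 3%nat ltac:(lia)) nil u v H)).
  assert (T2 := dz2 _ u v _ 0 H (fun t Ht => Hn3 u t Ht) (sm_d2 U (N 3%nat) (SN 3%nat ltac:(lia)) nil u v H)).
  assert (Sw : mink (Nn u v) (Xba u v) = mink (Nn u v) (Xab u v)) by (apply mink_ext_r, (Vschw2 X SX u v H)).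
  assert (n3 : Nn u v 3%nat = 0) by exact (Hn3 u v H).
  destruct (unitN u v H) as (_ & Na & Nb & _).
  rewrite (mink_hz_r (Nn u v) (Xa u v)) in F4. rewrite (mink_hz_r (Nn u v) (Xb u v)) in G4.
  rewrite (mink_sym (Nn u v) (Nu u v)) in F3. rewrite (mink_sym (Nn u v) (Nv u v)) in G3.
  unfold h11, h12, h22.
  change (Xuu X u v) with (Xaa u v). change (Xuv X u v) with (Xab u v). change (Xvv X u v) with (Xbb u v).
  change (at_ N u v) with (Nn u v).
  rewrite (mink_sym (Xaa u v) (Nn u v)), (mink_sym (Xab u v) (Nn u v)), (mink_sym (Xbb u v) (Nn u v)).
  rewrite n3 in F4, G4.
  repeat split; try lra.
  - exact T1.
  - exact T2.
Qed.

Lemma rodr u v : U (u, v) ->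
  let k := 2 * mean_curv X N u v in
  h11 X N u v = k * (mink (Xa u v) (Xa u v) - Xa u v 3%nat * Xa u v 3%nat) /\
  h12 X N u v = k * (mink (Xa u v) (Xb u v) - Xa u v 3%nat * Xb u v 3%nat) /\
  h22 X N u v = k * (mink (Xb u v) (Xb u v) - Xb u v 3%nat * Xb u v 3%nat) /\
  (forall i, (i < 3)%nat -> Nu u v i = - k * Xa u v i) /\
  (forall i, (i < 3)%nat -> Nv u v i = - k * Xb u v i).
Proof.
  intros H k.
  destruct (nfacts u v H) as (Fa & Fb & Fn & Fp & Ga & Gb & Gn & Gp & T1 & T2).
  assert (Hf := frameP u v H).
  assert (HD := detpos u v H).
  assert (n3 : Nn u v 3%nat = 0) by exact (Hn3 u v H).
  assert (p3 : Ph u v 3%nat = 0) by reflexivity.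
  assert (D1 := decomp _ _ _ _ (Nu u v) Hf 3%nat ltac:(lia)).
  assert (D2 := decomp _ _ _ _ (Nv u v) Hf 3%nat ltac:(lia)).
  assert (Pe := parse_e3 u v H).
  rewrite Fa, Fb, Fn, Fp, T1, n3, p3 in D1.
  rewrite Ga, Gb, Gn, Gp, T2, n3, p3 in D2.
  rewrite n3 in Pe.
  set (E := mink (Xa u v) (Xa u v)) in *.
  set (F := mink (Xa u v) (Xb u v)) in *.
  set (G := mink (Xb u v) (Xb u v)) in *.
  set (a3 := Xa u v 3%nat) in *. set (b3 := Xb u v 3%nat) in *.
  set (x11 := h11 X N u v) in *. set (x12 := h12 X N u v) in *. set (x22 := h22 X N u v) in *.
  assert (E1 : G * x11 * a3 - F * (x11 * b3 + x12 * a3) + E * x12 * b3 = 0).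
  { replace (G * x11 * a3 - F * (x11 * b3 + x12 * a3) + E * x12 * b3) with
      (- (E * G - F ^ 2) * (((G * - x11 - F * - x12) / (E * G - F ^ 2)) * a3 + ((E * - x12 - F * - x11) / (E * G - F ^ 2)) * b3))
      by (field; lra).
    replace (((G * - x11 - F * - x12) / (E * G - F ^ 2)) * a3 + ((E * - x12 - F * - x11) / (E * G - F ^ 2)) * b3) with 0 by lra.
    ring. }
  assert (E2 : G * x12 * a3 - F * (x12 * b3 + x22 * a3) + E * x22 * b3 = 0).
  { replace (G * x12 * a3 - F * (x12 * b3 + x22 * a3) + E * x22 * b3) with
      (- (E * G - F ^ 2) * (((G * - x12 - F * - x22) / (E * G - F ^ 2)) * a3 + ((E * - x22 - F * - x12) / (E * G - F ^ 2)) * b3))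
      by (field; lra).
    replace (((G * - x12 - F * - x22) / (E * G - F ^ 2)) * a3 + ((E * - x22 - F * - x12) / (E * G - F ^ 2)) * b3) with 0 by lra.
    ring. }
  assert (E3 : G * a3 * a3 - F * (a3 * b3 + b3 * a3) + E * b3 * b3 = E * G - F ^ 2).
  { assert (Q : (G * a3 * a3 - F * (a3 * b3 + b3 * a3) + E * b3 * b3) / (E * G - F ^ 2) = 1) by lra.
    apply (Rmult_eq_reg_r (/ (E * G - F ^ 2))); [|apply Rinv_neq_0_compat; lra].
    rewrite Rinv_r by lra. exact Q. }
  destruct (rod_alg E F G x11 x12 x22 a3 b3 ltac:(lra) E1 E2 E3) as (R1 & R2 & R3).
  assert (Hk : (G * x11 - 2 * F * x12 + E * x22) / (E * G - F ^ 2) = k).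
  { unfold k, mean_curv. change (GG X u v) with G. change (FF X u v) with F. change (EE X u v) with E.
    change (detg X u v) with (E * G - F ^ 2). fold x11 x12 x22. field. lra. }
  rewrite Hk in R1, R2, R3.
  split; [exact R1|]. split; [exact R2|]. split; [exact R3|].
  destruct (unitN u v H) as (_ & Na & Nb & _).
  assert (pa' : mink (Xa u v) (Ph u v) = 0) by (rewrite mink_sym; exact (pa u v H)).
  assert (pb' : mink (Xb u v) (Ph u v) = 0) by (rewrite mink_sym; exact (pb u v H)).
  assert (na' : mink (Xa u v) (Nn u v) = 0) by (rewrite mink_sym; exact Na).
  assert (nb' : mink (Xb u v) (Nn u v) = 0) by (rewrite mink_sym; exact Nb).
  split.
  - intros i Hi.
    assert (Z := frame_zero _ _ _ _ (fun i => 1 * Nu u v i + k * hz (Xa u v) i) Hf).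
    rewrite !mink_lin2, !mink_hz_l in Z.
    fold E F G a3 b3 in Z.
    rewrite Fa, Fb, Fn, Fp, na', pa', n3, p3 in Z.
    try fold x11 x12 in Z.
    specialize (Z ltac:(rewrite R1; ring) ltac:(rewrite R2; ring) ltac:(ring) ltac:(ring) i ltac:(lia)).
    rewrite hz_lt3 in Z by exact Hi. lra.
  - intros i Hi.
    assert (Z := frame_zero _ _ _ _ (fun i => 1 * Nv u v i + k * hz (Xb u v) i) Hf).
    rewrite !mink_lin2, !mink_hz_l in Z.
    fold E F G a3 b3 in Z.
    rewrite Ga, Gb, Gn, Gp, nb', pb', n3, p3 in Z.
    try fold x12 x22 in Z.
    rewrite (mink_sym (Xb u v) (Xa u v)) in Z. fold F in Z.
    specialize (Z ltac:(rewrite R2; ring) ltac:(rewrite R3; ring) ltac:(ring) ltac:(ring) i ltac:(lia)).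
    rewrite hz_lt3 in Z by exact Hi. lra.
Qed.

Lemma asym u v du dv : U (u, v) -> asymptotic_dir X N u v (du, dv) ->
  mean_curv X N u v <> 0 /\ (forall i, (i < 3)%nat -> du * Xa u v i + dv * Xb u v i = 0).
Proof.
  intros H [[_ [k [Hk [c' [Hc' Hs']]]]] [Hc Hs]].
  destruct c' as [d1 d2].
  assert (HD := detpos u v H).
  destruct (shape_alg (EE X u v) (FF X u v) (GG X u v) (h11 X N u v) (h12 X N u v) (h22 X N u v) du dv d1 d2 k)
    as (Z1 & Z2 & HT).
  - change (0 < EE X u v * GG X u v - FF X u v ^ 2) in HD. lra.
  - exact (f_equal fst Hs).
  - exact (f_equal snd Hs).
  - exact Hc.
  - exact (f_equal fst Hs').
  - exact (f_equal snd Hs').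
  - exact Hc'.
  - exact Hk.
  - assert (HH : mean_curv X N u v <> 0).
    { unfold mean_curv. change (detg X u v) with (EE X u v * GG X u v - FF X u v ^ 2).
      change (0 < detg X u v) in HD. unfold detg in HD.
      intro Z. apply HT. unfold Rdiv in Z. apply Rmult_integral in Z. destruct Z as [Z|Z]; [exact Z|].
      exfalso. revert Z. apply Rinv_neq_0_compat. lra. }
    split; [exact HH|].
    destruct (rodr u v H) as (R1 & R2 & R3 & _).
    set (kk := 2 * mean_curv X N u v) in *.
    assert (Hkk : kk <> 0) by (unfold kk; lra).
    change (EE X u v) with (mink (Xa u v) (Xa u v)) in Z1, Z2.
    rewrite R1, R2 in Z1. rewrite R2, R3 in Z2.
    assert (W1 : du * (mink (Xa u v) (Xa u v) - Xa u v 3%nat * Xa u v 3%nat) + dv * (mink (Xa u v) (Xb u v) - Xa u v 3%nat * Xb u v 3%nat) = 0).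
    { apply (Rmult_eq_reg_l kk); [|exact Hkk]. rewrite Rmult_0_r. transitivity (kk * (mink (Xa u v) (Xa u v) - Xa u v 3%nat * Xa u v 3%nat) * du + kk * (mink (Xa u v) (Xb u v) - Xa u v 3%nat * Xb u v 3%nat) * dv); [ring|exact Z1]. }
    assert (W2 : du * (mink (Xa u v) (Xb u v) - Xa u v 3%nat * Xb u v 3%nat) + dv * (mink (Xb u v) (Xb u v) - Xb u v 3%nat * Xb u v 3%nat) = 0).
    { apply (Rmult_eq_reg_l kk); [|exact Hkk]. rewrite Rmult_0_r. transitivity (kk * (mink (Xa u v) (Xb u v) - Xa u v 3%nat * Xb u v 3%nat) * du + kk * (mink (Xb u v) (Xb u v) - Xb u v 3%nat * Xb u v 3%nat) * dv); [ring|exact Z2]. }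
    destruct (unitN u v H) as (_ & Na & Nb & _).
    assert (pa' : mink (Xa u v) (Ph u v) = 0) by (rewrite mink_sym; exact (pa u v H)).
    assert (pb' : mink (Xb u v) (Ph u v) = 0) by (rewrite mink_sym; exact (pb u v H)).
    assert (na' : mink (Xa u v) (Nn u v) = 0) by (rewrite mink_sym; exact Na).
    assert (nb' : mink (Xb u v) (Nn u v) = 0) by (rewrite mink_sym; exact Nb).
    assert (n3 : Nn u v 3%nat = 0) by exact (Hn3 u v H).
    assert (p3 : Ph u v 3%nat = 0) by reflexivity.
    intros i Hi.
    assert (Z := frame_zero _ _ _ _ (fun i => du * hz (Xa u v) i + dv * hz (Xb u v) i) (frameP u v H)).
    rewrite !mink_lin2, !mink_hz_l in Z.
    rewrite na', nb', pa', pb', n3, p3 in Z.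
    rewrite (mink_sym (Xb u v) (Xa u v)) in Z.
    specialize (Z ltac:(lra) ltac:(lra) ltac:(ring) ltac:(ring) i ltac:(lia)).
    rewrite !hz_lt3 in Z by exact Hi. exact Z.
Qed.

Lemma exd_mean1 u v : U (u, v) -> ex_derive (fun t => mean_curv X N t v) u.
Proof.
  intros H.
  assert (HD := detpos u v H).
  assert (eE : ex_derive (fun t => EE X t v) u) by (eexists; exact (dm1 X X SX SX [true] [true] u v H)).
  assert (eF : ex_derive (fun t => FF X t v) u) by (eexists; exact (dm1 X X SX SX [true] [false] u v H)).
  assert (eG : ex_derive (fun t => GG X t v) u) by (eexists; exact (dm1 X X SX SX [false] [false] u v H)).
  assert (e11 : ex_derive (fun t => h11 X N t v) u) by (eexists; exact (dm1 X N SX SN [true; true] nil u v H)).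
  assert (e12 : ex_derive (fun t => h12 X N t v) u) by (eexists; exact (dm1 X N SX SN [false; true] nil u v H)).
  assert (e22 : ex_derive (fun t => h22 X N t v) u) by (eexists; exact (dm1 X N SX SN [false; false] nil u v H)).
  unfold mean_curv.
  apply (ex_derive_div (fun t => GG X t v * h11 X N t v - 2 * FF X t v * h12 X N t v + EE X t v * h22 X N t v)
                       (fun t => 2 * detg X t v)).
  - apply (exd_plus (fun t => GG X t v * h11 X N t v - 2 * FF X t v * h12 X N t v) (fun t => EE X t v * h22 X N t v)).
    + apply (exd_minus (fun t => GG X t v * h11 X N t v) (fun t => 2 * FF X t v * h12 X N t v)).
      * apply (exd_mult (fun t => GG X t v) (fun t => h11 X N t v)); assumption.
      * apply (exd_mult (fun t => 2 * FF X t v) (fun t => h12 X N t v)); [|assumption].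
        apply (exd_mult (fun _ => 2) (fun t => FF X t v)); [apply exd_const|assumption].
    + apply (exd_mult (fun t => EE X t v) (fun t => h22 X N t v)); assumption.
  - apply (exd_mult (fun _ => 2) (fun t => detg X t v)); [apply exd_const|]. unfold detg.
    apply (exd_minus (fun t => EE X t v * GG X t v) (fun t => FF X t v ^ 2)).
    + apply (exd_mult (fun t => EE X t v) (fun t => GG X t v)); assumption.
    + apply (ex_derive_pow (fun t => FF X t v)). exact eF.
  - change (2 * (EE X u v * GG X u v - FF X u v ^ 2) <> 0). change (0 < EE X u v * GG X u v - FF X u v ^ 2) in HD. lra.
Qed.

Lemma exd_mean2 u v : U (u, v) -> ex_derive (fun t => mean_curv X N u t) v.
Proof.
  intros H.
  assert (HD := detpos u v H).
  assert (eE : ex_derive (fun t => EE X u t) v) by (eexists; exact (dm2 X X SX SX [true] [true] u v H)).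
  assert (eF : ex_derive (fun t => FF X u t) v) by (eexists; exact (dm2 X X SX SX [true] [false] u v H)).
  assert (eG : ex_derive (fun t => GG X u t) v) by (eexists; exact (dm2 X X SX SX [false] [false] u v H)).
  assert (e11 : ex_derive (fun t => h11 X N u t) v) by (eexists; exact (dm2 X N SX SN [true; true] nil u v H)).
  assert (e12 : ex_derive (fun t => h12 X N u t) v) by (eexists; exact (dm2 X N SX SN [false; true] nil u v H)).
  assert (e22 : ex_derive (fun t => h22 X N u t) v) by (eexists; exact (dm2 X N SX SN [false; false] nil u v H)).
  unfold mean_curv.
  apply (ex_derive_div (fun t => GG X u t * h11 X N u t - 2 * FF X u t * h12 X N u t + EE X u t * h22 X N u t)
                       (fun t => 2 * detg X u t)).
  - apply (exd_plus (fun t => GG X u t * h11 X N u t - 2 * FF X u t * h12 X N u t) (fun t => EE X u t * h22 X N u t)).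
    + apply (exd_minus (fun t => GG X u t * h11 X N u t) (fun t => 2 * FF X u t * h12 X N u t)).
      * apply (exd_mult (fun t => GG X u t) (fun t => h11 X N u t)); assumption.
      * apply (exd_mult (fun t => 2 * FF X u t) (fun t => h12 X N u t)); [|assumption].
        apply (exd_mult (fun _ => 2) (fun t => FF X u t)); [apply exd_const|assumption].
    + apply (exd_mult (fun t => EE X u t) (fun t => h22 X N u t)); assumption.
  - apply (exd_mult (fun _ => 2) (fun t => detg X u t)); [apply exd_const|]. unfold detg.
    apply (exd_minus (fun t => EE X u t * GG X u t) (fun t => FF X u t ^ 2)).
    + apply (exd_mult (fun t => EE X u t) (fun t => GG X u t)); assumption.
    + apply (ex_derive_pow (fun t => FF X u t)). exact eF.
  - change (2 * (EE X u v * GG X u v - FF X u v ^ 2) <> 0). change (0 < EE X u v * GG X u v - FF X u v ^ 2) in HD. lra.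
Qed.

Lemma kd1 u v : U (u, v) -> is_derive (fun t => 2 * mean_curv X N t v) u (Derive (fun t => 2 * mean_curv X N t v) u).
Proof. intros H. apply Derive_correct. apply (exd_mult (fun _ => 2)); [apply exd_const|exact (exd_mean1 u v H)]. Qed.
Lemma kd2 u v : U (u, v) -> is_derive (fun t => 2 * mean_curv X N u t) v (Derive (fun t => 2 * mean_curv X N u t) v).
Proof. intros H. apply Derive_correct. apply (exd_mult (fun _ => 2)); [apply exd_const|exact (exd_mean2 u v H)]. Qed.

Lemma kderiv u v i : (i < 3)%nat -> U (u, v) ->
  pdw [true; true] (N i) u v = - (Derive (fun t => 2 * mean_curv X N t v) u * Xa u v i + 2 * mean_curv X N u v * Xaa u v i) /\
  pdw [false; true] (N i) u v = - (Derive (fun t => 2 * mean_curv X N u t) v * Xa u v i + 2 * mean_curv X N u v * Xab u v i) /\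
  pdw [true; false] (N i) u v = - (Derive (fun t => 2 * mean_curv X N t v) u * Xb u v i + 2 * mean_curv X N u v * Xba u v i) /\
  pdw [false; false] (N i) u v = - (Derive (fun t => 2 * mean_curv X N u t) v * Xb u v i + 2 * mean_curv X N u v * Xbb u v i).
Proof.
  intros Hi H.
  assert (Hi4 : (i < 4)%nat) by lia.
  split; [|split; [|split]].
  - transitivity (Derive (fun t => (- (2 * mean_curv X N t v)) * pdw [true] (X i) t v) u).
    + apply Derive_ext_loc. apply (filter_imp (fun t => U (t, v))); [|exact (loc2_1 U u v HU H)].
      intros t Ht. destruct (rodr t v Ht) as (_ & _ & _ & R4 & _). exact (R4 i Hi).
    + apply is_derive_unique.
      eapply isd_ext; [intro t; reflexivity| |apply isd_mult; [apply isd_opp, kd1, H|exact (sm_d1 U (X i) (SX i Hi4) [true] u v H)]].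
      unfold V. ring.
  - transitivity (Derive (fun t => (- (2 * mean_curv X N u t)) * pdw [true] (X i) u t) v).
    + apply Derive_ext_loc. apply (filter_imp (fun t => U (u, t))); [|exact (loc2_2 U u v HU H)].
      intros t Ht. destruct (rodr u t Ht) as (_ & _ & _ & R4 & _). exact (R4 i Hi).
    + apply is_derive_unique.
      eapply isd_ext; [intro t; reflexivity| |apply isd_mult; [apply isd_opp, kd2, H|exact (sm_d2 U (X i) (SX i Hi4) [true] u v H)]].
      unfold V. ring.
  - transitivity (Derive (fun t => (- (2 * mean_curv X N t v)) * pdw [false] (X i) t v) u).
    + apply Derive_ext_loc. apply (filter_imp (fun t => U (t, v))); [|exact (loc2_1 U u v HU H)].
      intros t Ht. destruct (rodr t v Ht) as (_ & _ & _ & _ & R5). exact (R5 i Hi).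
    + apply is_derive_unique.
      eapply isd_ext; [intro t; reflexivity| |apply isd_mult; [apply isd_opp, kd1, H|exact (sm_d1 U (X i) (SX i Hi4) [false] u v H)]].
      unfold V. ring.
  - transitivity (Derive (fun t => (- (2 * mean_curv X N u t)) * pdw [false] (X i) u t) v).
    + apply Derive_ext_loc. apply (filter_imp (fun t => U (u, t))); [|exact (loc2_2 U u v HU H)].
      intros t Ht. destruct (rodr u t Ht) as (_ & _ & _ & _ & R5). exact (R5 i Hi).
    + apply is_derive_unique.
      eapply isd_ext; [intro t; reflexivity| |apply isd_mult; [apply isd_opp, kd2, H|exact (sm_d2 U (X i) (SX i Hi4) [false] u v H)]].
      unfold V. ring.
Qed.

Lemma krel u v i : (i < 3)%nat -> U (u, v) ->
  Derive (fun t => 2 * mean_curv X N t v) u * Xb u v i = Derive (fun t => 2 * mean_curv X N u t) v * Xa u v i.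
Proof.
  intros Hi H.
  assert (Hi4 : (i < 4)%nat) by lia.
  destruct (kderiv u v i Hi H) as (_ & K2 & K3 & _).
  assert (S := schw2 (N i) (SN i Hi4) u v H).
  assert (SXi := schw2 (X i) (SX i Hi4) u v H).
  rewrite K2, K3 in S. unfold V in *. rewrite SXi in S. lra.
Qed.

Lemma Hcurve (cu cv : R -> R) (s du dv : R) :
  is_derive cu s du -> is_derive cv s dv ->
  locally s (fun t => U (cu t, cv t)) ->
  asymptotic_dir X N (cu s) (cv s) (du, dv) ->
  is_derive (fun t => mean_curv X N (cu t) (cv t)) s 0 /\ mean_curv X N (cu s) (cv s) <> 0.
Proof.
  intros Hcu Hcv HL Has.
  assert (Hs : U (cu s, cv s)) by exact (locally_singleton _ _ HL).
  destruct (asym _ _ du dv Hs Has) as [HH Hlin].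
  split; [|exact HH].
  destruct (nz_pick _ _ (detpos _ _ Hs)) as [i [Hi [Ha|Hb]]].
  - assert (Hi4 : (i < 4)%nat) by lia.
    assert (dpsi := sm_chain U (X i) HU (SX i Hi4) [true] cu cv s du dv Hs Hcu Hcv).
    assert (dnu := sm_chain U (N i) HU (SN i Hi4) [true] cu cv s du dv Hs Hcu Hcv).
    assert (Lnz := loc_nz _ _ _ dpsi Ha).
    apply (is_derive_ext_loc (fun t => (- pdw [true] (N i) (cu t) (cv t)) / (2 * pdw [true] (X i) (cu t) (cv t)))).
    + apply (filter_imp (fun t => U (cu t, cv t) /\ pdw [true] (X i) (cu t) (cv t) <> 0)); [|apply filter_and; assumption].
      intros t [Ht Hnz]. destruct (rodr _ _ Ht) as (_ & _ & _ & R4 & _).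
      specialize (R4 i Hi). unfold V in R4. cbv beta. rewrite R4. exact (mc_aux _ _ Hnz).
    + set (u := cu s) in *. set (v := cv s) in *.
      destruct (kderiv u v i Hi Hs) as (K1 & K2 & _ & _).
      destruct (rodr _ _ Hs) as (_ & _ & _ & R4 & _). specialize (R4 i Hi). unfold V in R4.
      assert (KR := krel u v i Hi Hs). specialize (Hlin i Hi). unfold V in KR, Hlin, K1, K2.
      rewrite K1, K2 in dnu.
      eapply isd_ext; [intro t; reflexivity| |].
      2: { apply is_derive_div.
           - apply isd_opp. exact dnu.
           - apply (is_derive_scal (fun t => pdw [true] (X i) (cu t) (cv t))). exact dpsi.
           - cbv beta. fold u v. apply Rmult_integral_contrapositive; split; [lra|exact Ha]. }
      cbv beta. fold u v. rewrite R4.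
      set (ku := Derive (fun t => 2 * mean_curv X N t v) u) in *.
      set (kv := Derive (fun t => 2 * mean_curv X N u t) v) in *.
      set (k := 2 * mean_curv X N u v) in *.
      set (ai := pdw [true] (X i) u v) in *. set (bi := pdw [false] (X i) u v) in *.
      assert (Z : (ku * du + kv * dv) * ai = 0).
      { replace ((ku * du + kv * dv) * ai) with (ku * (du * ai + dv * bi) + dv * (kv * ai - ku * bi)) by ring.
        rewrite Hlin, KR. ring. }
      match goal with |- ?n / ?d = 0 => replace n with (2 * ai * ((ku * du + kv * dv) * ai)) by ring end.
      rewrite Z. unfold Rdiv. ring.
  - assert (Hi4 : (i < 4)%nat) by lia.
    assert (dpsi := sm_chain U (X i) HU (SX i Hi4) [false] cu cv s du dv Hs Hcu Hcv).
    assert (dnu := sm_chain U (N i) HU (SN i Hi4) [false] cu cv s du dv Hs Hcu Hcv).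
    assert (Lnz := loc_nz _ _ _ dpsi Hb).
    apply (is_derive_ext_loc (fun t => (- pdw [false] (N i) (cu t) (cv t)) / (2 * pdw [false] (X i) (cu t) (cv t)))).
    + apply (filter_imp (fun t => U (cu t, cv t) /\ pdw [false] (X i) (cu t) (cv t) <> 0)); [|apply filter_and; assumption].
      intros t [Ht Hnz]. destruct (rodr _ _ Ht) as (_ & _ & _ & _ & R5).
      specialize (R5 i Hi). unfold V in R5. cbv beta. rewrite R5. exact (mc_aux _ _ Hnz).
    + set (u := cu s) in *. set (v := cv s) in *.
      destruct (kderiv u v i Hi Hs) as (_ & _ & K3 & K4).
      destruct (rodr _ _ Hs) as (_ & _ & _ & _ & R5). specialize (R5 i Hi). unfold V in R5.
      assert (KR := krel u v i Hi Hs). specialize (Hlin i Hi). unfold V in KR, Hlin, K3, K4.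
      rewrite K3, K4 in dnu.
      eapply isd_ext; [intro t; reflexivity| |].
      2: { apply is_derive_div.
           - apply isd_opp. exact dnu.
           - apply (is_derive_scal (fun t => pdw [false] (X i) (cu t) (cv t))). exact dpsi.
           - cbv beta. fold u v. apply Rmult_integral_contrapositive; split; [lra|exact Hb]. }
      cbv beta. fold u v. rewrite R5.
      set (ku := Derive (fun t => 2 * mean_curv X N t v) u) in *.
      set (kv := Derive (fun t => 2 * mean_curv X N u t) v) in *.
      set (k := 2 * mean_curv X N u v) in *.
      set (ai := pdw [true] (X i) u v) in *. set (bi := pdw [false] (X i) u v) in *.
      assert (Z : (ku * du + kv * dv) * bi = 0).
      { replace ((ku * du + kv * dv) * bi) with (kv * (du * ai + dv * bi) + du * (ku * bi - kv * ai)) by ring.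
        rewrite Hlin, KR. ring. }
      match goal with |- ?n / ?d = 0 => replace n with (2 * bi * ((ku * du + kv * dv) * bi)) by ring end.
      rewrite Z. unfold Rdiv. ring.
Qed.
End Geo.


Theorem mainTheorem3
  (U : R * R -> Prop) (X N : param)
  (HX : surface_in_H2xR U X) (HN : unit_normal U X N)
  (Hext : forall p, U p -> extrinsic_curv X N (fst p) (snd p) = 0)
  (Hgauss : forall p, U p -> gauss_curv X (fst p) (snd p) = 0)
  (a b : R) (cu cv : R -> R) (Hab : a < b)
  (Hu : smooth1_on a b cu) (Hv : smooth1_on a b cv)
  (HinU : forall s, a < s < b -> U (cu s, cv s))
  (Harc : forall s, a < s < b ->
     mink (fun i => Derive (curve X cu cv i) s)
          (fun i => Derive (curve X cu cv i) s) = 1)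
  (Hasym : forall s, a < s < b ->
     asymptotic_dir X N (cu s) (cv s) (Derive cu s, Derive cv s)) :
  exists dH : R -> R,
    forall s, a < s < b ->
      is_derive (fun t => / mean_curv X N (cu t) (cv t)) s (dH s) /\
      is_derive dH s 0.
Proof.
  pose proof HX as (HU & SX & _).
  pose proof HN as (SN & _).
  assert (Hn3 : forall u v, U (u, v) -> N 3%nat u v = 0).
  { intros u v H. exact (n3zero U X N HU SX HX HN u v H (Hgauss (u, v) H) (Hext (u, v) H)). }
  exists (fun _ => 0). intros s Hs. split; [|apply isd_const].
  assert (Du : is_derive cu s (Derive cu s)) by (apply Derive_correct; exact (Hu 1%nat s Hs)).
  assert (Dv : is_derive cv s (Derive cv s)) by (apply Derive_correct; exact (Hv 1%nat s Hs)).
  assert (HL : locally s (fun t => U (cu t, cv t))).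
  { apply (filter_imp (fun t => a < t /\ t < b)).
    - intros t Ht. apply HinU. exact Ht.
    - apply (open_and _ _ (open_gt a) (open_lt b)). exact Hs. }
  destruct (Hcurve U X N HU SX SN HX HN Hn3 cu cv s _ _ Du Dv HL (Hasym s Hs)) as [Hd Hnz].
  eapply isd_ext; [intro t; reflexivity| |].
  2: { apply is_derive_inv; [exact Hd|exact Hnz]. }
  field. exact Hnz.
Qed.
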